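(* Let $\mathbf{X}$ be a computably compact computable metric space. Then $\mathbf{X}$ is $'$-overt, i.e. the map $\operatorname{IsNonEmpty}:\mathcal{O}'(\mathbf{X})\to\mathbb{S}'$, $U\mapsto\top$ iff $U\neq\emptyset$, is computable.
   Context: A represented space is a pair $(X,\delta_X)$ with $\delta_X:\subseteq\mathbb{N}^\mathbb{N}\to X$ a partial surjection; maps are computable if they have a computable realizer on names. $\mathcal{C}(\mathbf{X},\mathbf{Y})$ is the represented space of continuous maps. A computable metric space carries its Cauchy representation. $\mathbb{S}=(\{\bot,\top\},\delta_\mathbb{S})$ with $\delta_\mathbb{S}(0^\mathbb{N})=\bot$, $\delta_\mathbb{S}(p)=\top$ otherwise; $\mathcal{O}(\mathbf{X})=\mathcal{C}(\mathbf{X},\mathbb{S})$ (open sets identified with characteristic functions). $\lim(p)(n)=\lim_{i\to\infty}p(\langle n,i\rangle)$, $\mathbb{S}'=(\{\bot,\top\},\delta_\mathbb{S}\circ\lim)$, $\mathcal{O}'(\mathbf{X})=\mathcal{C}(\mathbf{X},\mathbb{S}')$, elements identified with subsets of $X$. $\mathbf{X}$ is computably compact if $\operatorname{IsFull}:\mathcal{O}(\mathbf{X})\to\mathbb{S}$, $U\mapsto\top$ iff $U=X$, is computable. *)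

(* Defs.v *)
From Stdlib Require Import Reals List Arith ClassicalEpsilon.
Open Scope R_scope.

Inductive recf : Type :=
| RZero : recf
| RSucc : recf
| RProj : nat -> recf
| RComp : recf -> list recf -> recf
| RPrim : recf -> recf -> recf
| RMu   : recf -> recf.

Inductive ev : recf -> list nat -> nat -> Prop :=
| ev_zero : forall xs, ev RZero xs 0
| ev_succ : forall x xs, ev RSucc (x :: xs) (S x)
| ev_proj : forall i xs, ev (RProj i) xs (nth i xs 0%nat)
| ev_comp : forall f gs xs ys v, evs gs xs ys -> ev f ys v -> ev (RComp f gs) xs v
| ev_prim0 : forall f g xs v, ev f xs v -> ev (RPrim f g) (0%nat :: xs) v
| ev_primS : forall f g n xs w v,
    ev (RPrim f g) (n :: xs) w -> ev g (n :: w :: xs) v -> ev (RPrim f g) (S n :: xs) v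
| ev_mu : forall f xs y,
    ev f (y :: xs) 0%nat ->
    (forall z, (z < y)%nat -> exists w, ev f (z :: xs) w /\ w <> 0%nat) ->
    ev (RMu f) xs y
with evs : list recf -> list nat -> list nat -> Prop :=
| evs_nil : forall xs, evs nil xs nil
| evs_cons : forall g gs xs y ys, ev g xs y -> evs gs xs ys -> evs (g :: gs) xs (y :: ys).

Definition computable_nat (h : nat -> nat) : Prop :=
  exists e : recf, forall n, ev e (n :: nil) (h n).

Definition cpair (a b : nat) : nat := ((a + b) * S (a + b) / 2 + b)%nat.

Fixpoint code_list (l : list nat) : nat :=
  match l with nil => 0%nat | x :: l' => S (cpair x (code_list l')) end.

Definition prefix (q : nat -> nat) (k : nat) : list nat := map q (seq 0 k).

Definition assoc (h q r : nat -> nat) : Prop :=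
  forall n, exists k,
    h (cpair n (code_list (prefix q k))) = S (r n) /\
    forall j, (j < k)%nat -> h (cpair n (code_list (prefix q j))) = 0%nat.

(* delta is a partial map N^N -> carrier, given as its graph. *)
Record rep_space : Type := RepSpace {
  carrier :> Type;
  delta : (nat -> nat) -> carrier -> Prop
}.

Definition realizes {X Y : rep_space} (h : nat -> nat) (f : X -> Y) : Prop :=
  forall q x, delta X q x -> exists r, assoc h q r /\ delta Y r (f x).

Definition is_computable {X Y : rep_space} (f : X -> Y) : Prop :=
  exists h, computable_nat h /\ realizes h f.

Definition is_continuous {X Y : rep_space} (f : X -> Y) : Prop :=
  exists h, realizes h f.

Definition cont_map (X Y : rep_space) : Type := { f : X -> Y | is_continuous f }.

Definition Cspace (X Y : rep_space) : rep_space :=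
  RepSpace (cont_map X Y) (fun p f => realizes p (proj1_sig f)).

(* Sierpinski space S: false = bot, true = top; 0^N names bot, everything else top. *)
Definition Sierp : rep_space :=
  RepSpace bool (fun p b => b = true <-> exists n, p n <> 0%nat).

Definition is_lim (p r : nat -> nat) : Prop :=
  forall n, exists i0, forall i, (i0 <= i)%nat -> p (cpair n i) = r n.

Definition Sierp' : rep_space :=
  RepSpace bool (fun p b => exists r, is_lim p r /\ delta Sierp r b).

Definition Ospace (X : rep_space) : rep_space := Cspace X Sierp.
Definition Ospace' (X : rep_space) : rep_space := Cspace X Sierp'.

Definition bool_of (P : Prop) : bool :=
  if excluded_middle_informative P then true else false.

Definition IsFull (X : rep_space) (U : Ospace X) : Sierp :=
  bool_of (forall x : X, proj1_sig U x = true).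

Definition IsNonEmpty' (X : rep_space) (U : Ospace' X) : Sierp' :=
  bool_of (exists x : X, proj1_sig U x = true).

Definition computably_compact (X : rep_space) : Prop :=
  is_computable (IsFull X).

Definition prime_overt (X : rep_space) : Prop :=
  is_computable (IsNonEmpty' X).

Record cmetric_space : Type := CMetric {
  cm_pt :> Type;
  cm_dist : cm_pt -> cm_pt -> R;
  cm_dist_ge0 : forall x y, 0 <= cm_dist x y;
  cm_dist_eq0 : forall x y, cm_dist x y = 0 <-> x = y;
  cm_dist_sym : forall x y, cm_dist x y = cm_dist y x;
  cm_dist_tri : forall x y z, cm_dist x z <= cm_dist x y + cm_dist y z;
  cm_dense : nat -> cm_pt;
  cm_dense_prop : forall x eps, 0 < eps -> exists i, cm_dist x (cm_dense i) < eps;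
  (* the distances between dense points are uniformly computable reals:
     rational approximations (a - b)/(c + 1) with error <= 2^-n *)
  cm_dist_computable : exists ha hb hc : nat -> nat,
    computable_nat ha /\ computable_nat hb /\ computable_nat hc /\
    forall i j n,
      let m := cpair (cpair i j) n in
      Rabs ((INR (ha m) - INR (hb m)) / INR (S (hc m))
            - cm_dist (cm_dense i) (cm_dense j)) <= / 2 ^ n
}.

Definition cauchy_rep (M : cmetric_space) : rep_space :=
  RepSpace M (fun p x => forall n, cm_dist M (cm_dense M (p n)) x <= / 2 ^ n).

(* Main.v *)
Require Import Defs.
From Stdlib Require Import Reals.
From Stdlib Require Import List Arith Lia Lra ClassicalEpsilon Classical.
Import ListNotations.
Open Scope nat_scope.

Open Scope nat_scope.

Definition CP (k : nat) (f : list nat -> nat) : Prop :=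
  exists e, forall xs, length xs = k -> ev e xs (f xs).

Lemma C_ext k f g : CP k f -> (forall xs, length xs = k -> f xs = g xs) -> CP k g.
Proof. intros [e He] H; exists e; intros xs Hl; rewrite <- H by exact Hl; auto. Qed.

Lemma C_proj k i : i < k -> CP k (fun xs => nth i xs 0).
Proof. intros _; exists (RProj i); intros; constructor. Qed.

Lemma C_zero k : CP k (fun _ => 0).
Proof. exists RZero; intros; constructor. Qed.

Lemma C_comp k m f gs : CP m f -> length gs = m -> Forall (fun g => CP k g) gs ->
  CP k (fun xs => f (map (fun g => g xs) gs)).
Proof.
  intros [ef Hf] Hl HF.
  assert (H : exists es, forall xs, length xs = k -> evs es xs (map (fun g => g xs) gs)).
  { clear Hl. induction HF as [|g gs [eg Hg] _ [es Hes]].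
    - exists nil; intros; constructor.
    - exists (eg :: es); intros; simpl; constructor; auto. }
  destruct H as [es Hes]. exists (RComp ef es); intros xs Hx.
  econstructor; [apply Hes; auto|]. apply Hf. rewrite length_map; auto.
Qed.

Fixpoint primrec (f0 g : list nat -> nat) (n : nat) (ps : list nat) : nat :=
  match n with 0 => f0 ps | S n' => g (n' :: primrec f0 g n' ps :: ps) end.

Lemma C_prim k f0 g : CP k f0 -> CP (S (S k)) g ->
  CP (S k) (fun xs => primrec f0 g (hd 0 xs) (tl xs)).
Proof.
  intros [ef Hf] [eg Hg]. exists (RPrim ef eg). intros [|n ps] Hl; [discriminate|].
  simpl in Hl |- *. injection Hl as Hl.
  induction n; simpl.
  - constructor; auto.
  - econstructor; [exact IHn|]. apply Hg. simpl; lia.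
Qed.

Lemma C_mu k f m : CP (S k) f ->
  (forall ps, length ps = k -> f (m ps :: ps) = 0 /\ forall z, z < m ps -> f (z :: ps) <> 0) ->
  CP k m.
Proof.
  intros [ef Hf] H. exists (RMu ef). intros ps Hl. destruct (H ps Hl) as [H1 H2].
  constructor.
  - rewrite <- H1. apply Hf; simpl; lia.
  - intros z Hz. exists (f (z :: ps)). split; auto. apply Hf; simpl; lia.
Qed.

Definition CP1 (F : nat -> nat) := CP 1 (fun xs => F (nth 0 xs 0)).
Definition CP2 (F : nat -> nat -> nat) := CP 2 (fun xs => F (nth 0 xs 0) (nth 1 xs 0)).
Definition CP3 (F : nat -> nat -> nat -> nat) :=
  CP 3 (fun xs => F (nth 0 xs 0) (nth 1 xs 0) (nth 2 xs 0)).
Definition CP4 (F : nat -> nat -> nat -> nat -> nat) :=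
  CP 4 (fun xs => F (nth 0 xs 0) (nth 1 xs 0) (nth 2 xs 0) (nth 3 xs 0)).

Lemma C_app1 k F g : CP1 F -> CP k g -> CP k (fun xs => F (g xs)).
Proof.
  intros HF Hg. eapply C_ext.
  - apply (C_comp k 1 _ [g] HF); auto.
  - intros; reflexivity.
Qed.
Lemma C_app2 k F g1 g2 : CP2 F -> CP k g1 -> CP k g2 -> CP k (fun xs => F (g1 xs) (g2 xs)).
Proof.
  intros HF H1 H2. eapply C_ext.
  - apply (C_comp k 2 _ [g1; g2] HF); auto.
  - intros; reflexivity.
Qed.
Lemma C_app3 k F g1 g2 g3 : CP3 F -> CP k g1 -> CP k g2 -> CP k g3 ->
  CP k (fun xs => F (g1 xs) (g2 xs) (g3 xs)).
Proof.
  intros HF H1 H2 H3. eapply C_ext.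
  - apply (C_comp k 3 _ [g1; g2; g3] HF); auto.
  - intros; reflexivity.
Qed.
Lemma C_app4 k F g1 g2 g3 g4 : CP4 F -> CP k g1 -> CP k g2 -> CP k g3 -> CP k g4 ->
  CP k (fun xs => F (g1 xs) (g2 xs) (g3 xs) (g4 xs)).
Proof.
  intros HF H1 H2 H3 H4. eapply C_ext.
  - apply (C_comp k 4 _ [g1; g2; g3; g4] HF); auto.
  - intros; reflexivity.
Qed.

Lemma C_succ : CP1 S.
Proof. exists (RComp RSucc [RProj 0]). intros xs _. econstructor.
  - constructor; [constructor|constructor].
  - constructor. Qed.

Lemma C_const k c : CP k (fun _ => c).
Proof. induction c. apply C_zero. apply (C_app1 k S (fun _ => c)); auto using C_succ. Qed.

Lemma C_p0 k : 0 < k -> CP k (fun xs => nth 0 xs 0). Proof. apply C_proj. Qed.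

Lemma C_rec1 (F : nat -> nat) (a : nat) (G : nat -> nat -> nat) :
  F 0 = a -> (forall n, F (S n) = G n (F n)) -> CP2 G -> CP1 F.
Proof.
  intros H0 HS HG.
  assert (HP := C_prim 0 (fun _ => a) (fun ys => G (nth 0 ys 0) (nth 1 ys 0)) (C_const 0 a) HG).
  eapply C_ext; [exact HP|]. intros [|n ps] Hl; [discriminate|]. simpl. clear Hl.
  induction n; simpl; [auto|]. rewrite HS, IHn. auto.
Qed.

Lemma C_rec2 (F : nat -> nat -> nat) (f0 : nat -> nat) (G : nat -> nat -> nat -> nat) :
  (forall m, F 0 m = f0 m) -> (forall n m, F (S n) m = G n (F n m) m) -> CP1 f0 -> CP3 G -> CP2 F.
Proof.
  intros H0 HS Hf HG.
  assert (HP := C_prim 1 (fun ps => f0 (nth 0 ps 0)) (fun ys => G (nth 0 ys 0) (nth 1 ys 0) (nth 2 ys 0)) Hf HG).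
  eapply C_ext; [exact HP|]. intros [|n ps] Hl; [discriminate|]. simpl. clear Hl.
  induction n; simpl; [auto|]. rewrite HS, IHn. auto.
Qed.

Lemma C_rec3 (F : nat -> nat -> nat -> nat) (f0 : nat -> nat -> nat) (G : nat -> nat -> nat -> nat -> nat) :
  (forall a b, F 0 a b = f0 a b) -> (forall n a b, F (S n) a b = G n (F n a b) a b) -> CP2 f0 -> CP4 G -> CP3 F.
Proof.
  intros H0 HS Hf HG.
  assert (HP := C_prim 2 (fun ps => f0 (nth 0 ps 0) (nth 1 ps 0)) (fun ys => G (nth 0 ys 0) (nth 1 ys 0) (nth 2 ys 0) (nth 3 ys 0)) Hf HG).
  eapply C_ext; [exact HP|]. intros [|n ps] Hl; [discriminate|]. simpl. clear Hl.
  induction n; simpl; [auto|]. rewrite HS, IHn. auto.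
Qed.

Open Scope nat_scope.

Create HintDb cdb.
#[export] Hint Resolve C_succ : cdb.

Ltac cs := cbv beta; first
 [ apply C_proj; simpl; lia
 | match goal with |- CP _ (fun _ => ?c) => apply C_const end
 | match goal with |- CP ?k (fun xs => ?F (@?g1 xs) (@?g2 xs) (@?g3 xs) (@?g4 xs)) =>
      apply (C_app4 k F g1 g2 g3 g4); [solve [eauto with cdb]|cs|cs|cs|cs] end
 | match goal with |- CP ?k (fun xs => ?F (@?g1 xs) (@?g2 xs) (@?g3 xs)) =>
      apply (C_app3 k F g1 g2 g3); [solve [eauto with cdb]|cs|cs|cs] end
 | match goal with |- CP ?k (fun xs => ?F (@?g1 xs) (@?g2 xs)) =>
      apply (C_app2 k F g1 g2); [solve [eauto with cdb]|cs|cs] end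
 | match goal with |- CP ?k (fun xs => ?F (@?g1 xs)) =>
      apply (C_app1 k F g1); [solve [eauto with cdb]|cs] end ].
Ltac cs1 := unfold CP1, CP2, CP3, CP4; cbv beta; cs.

Lemma C_add : CP2 Nat.add.
Proof. apply (C_rec2 _ (fun m => m) (fun n r m => S r)); auto; cs1. Qed.
#[export] Hint Resolve C_add : cdb.
Lemma C_mul : CP2 Nat.mul.
Proof. apply (C_rec2 _ (fun m => 0) (fun n r m => m + r)); auto; cs1. Qed.
#[export] Hint Resolve C_mul : cdb.
Lemma C_pred : CP1 Nat.pred.
Proof. apply (C_rec1 _ 0 (fun n r => n)); auto; cs1. Qed.
#[export] Hint Resolve C_pred : cdb.
Definition subr (b a : nat) := a - b.
Lemma C_subr : CP2 subr.
Proof. apply (C_rec2 _ (fun a => a) (fun n r a => pred r)); unfold subr; intros; try lia; cs1. Qed.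
#[export] Hint Resolve C_subr : cdb.
Lemma C_sub : CP2 Nat.sub.
Proof. eapply C_ext with (f := fun xs => subr (nth 1 xs 0) (nth 0 xs 0)). cs. reflexivity. Qed.
#[export] Hint Resolve C_sub : cdb.
Definition powr (e b : nat) := b ^ e.
Lemma C_powr : CP2 powr.
Proof. apply (C_rec2 _ (fun b => 1) (fun n r b => b * r)); unfold powr; intros; simpl; try lia; cs1. Qed.
Lemma C_pow : CP2 Nat.pow.
Proof. pose proof C_powr. eapply C_ext with (f := fun xs => powr (nth 1 xs 0) (nth 0 xs 0)). cs. reflexivity. Qed.
#[export] Hint Resolve C_pow : cdb.
Definition isz (n : nat) := match n with 0 => 1 | _ => 0 end.
Lemma C_isz : CP1 isz.
Proof. apply (C_rec1 _ 1 (fun n r => 0)); auto; cs1. Qed.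
#[export] Hint Resolve C_isz : cdb.
Definition sg (n : nat) := match n with 0 => 0 | _ => 1 end.
Lemma C_sg : CP1 sg.
Proof. apply (C_rec1 _ 0 (fun n r => 1)); auto; cs1. Qed.
#[export] Hint Resolve C_sg : cdb.
Definition ite (c x y : nat) := match c with 0 => y | _ => x end.
Lemma C_ite : CP3 ite.
Proof. eapply C_ext with (f := fun xs => sg (nth 0 xs 0) * nth 1 xs 0 + isz (nth 0 xs 0) * nth 2 xs 0).
  cs. intros xs _. destruct (nth 0 xs 0); simpl; lia. Qed.
#[export] Hint Resolve C_ite : cdb.
Definition b2n (b : bool) := if b then 1 else 0.
Definition lebn a b := b2n (a <=? b).
Lemma C_lebn : CP2 lebn.
Proof. eapply C_ext with (f := fun xs => isz (nth 0 xs 0 - nth 1 xs 0)). cs.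
  intros xs _. unfold lebn. destruct (nth 0 xs 0 <=? nth 1 xs 0) eqn:E; simpl.
  apply Nat.leb_le in E. replace (nth 0 xs 0 - nth 1 xs 0) with 0 by lia. auto.
  apply Nat.leb_gt in E. destruct (nth 0 xs 0 - nth 1 xs 0) eqn:E2; [lia|auto]. Qed.
#[export] Hint Resolve C_lebn : cdb.
Definition ltbn a b := b2n (a <? b).
Lemma C_ltbn : CP2 ltbn.
Proof. eapply C_ext with (f := fun xs => lebn (S (nth 0 xs 0)) (nth 1 xs 0)). cs.
  intros xs _. reflexivity. Qed.
#[export] Hint Resolve C_ltbn : cdb.
Definition eqbn a b := b2n (a =? b).
Lemma C_eqbn : CP2 eqbn.
Proof. eapply C_ext with (f := fun xs => lebn (nth 0 xs 0) (nth 1 xs 0) * lebn (nth 1 xs 0) (nth 0 xs 0)). cs.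
  intros xs _. unfold lebn, eqbn.
  destruct (Nat.eqb_spec (nth 0 xs 0) (nth 1 xs 0)); destruct (Nat.leb_spec (nth 0 xs 0) (nth 1 xs 0));
  destruct (Nat.leb_spec (nth 1 xs 0) (nth 0 xs 0)); simpl; lia. Qed.
#[export] Hint Resolve C_eqbn : cdb.
Definition andn a b := sg a * sg b.
Definition orn a b := sg (a + b).
Lemma C_andn : CP2 andn. Proof. unfold andn; cs1. Qed.
Lemma C_orn : CP2 orn. Proof. unfold orn; cs1. Qed.
#[export] Hint Resolve C_andn C_orn : cdb.
Definition oddn n := b2n (Nat.odd n).
Lemma C_oddn : CP1 oddn.
Proof. apply (C_rec1 _ 0 (fun n r => isz r)); auto.
  intros n; unfold oddn; rewrite Nat.odd_succ, <- Nat.negb_odd; destruct (Nat.odd n); auto. cs1. Qed.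
#[export] Hint Resolve C_oddn : cdb.
Lemma C_div2 : CP1 Nat.div2.
Proof. apply (C_rec1 _ 0 (fun n r => r + oddn n)); auto.
  - intros n. unfold oddn. pose proof (Nat.div2_odd n). pose proof (Nat.div2_odd (S n)).
    rewrite Nat.odd_succ, <- Nat.negb_odd in H0. destruct (Nat.odd n); simpl in *; lia.
  - cs1. Qed.
#[export] Hint Resolve C_div2 : cdb.
Lemma C_div2' : CP1 (fun n => n / 2).
Proof. eapply C_ext; [apply C_div2|]. intros; simpl. rewrite Nat.div2_div; auto. Qed.
#[export] Hint Resolve C_div2' : cdb.
Lemma C_cpair : CP2 cpair.
Proof. eapply C_ext with (f := fun xs => Nat.div2 ((nth 0 xs 0 + nth 1 xs 0) * S (nth 0 xs 0 + nth 1 xs 0)) + nth 1 xs 0).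
  cs. intros; unfold cpair; rewrite Nat.div2_div; auto. Qed.
#[export] Hint Resolve C_cpair : cdb.

Open Scope nat_scope.

Lemma map_nth_seq (l : list nat) : map (fun i => nth i l 0) (seq 0 (length l)) = l.
Proof.
  apply nth_ext with (d := 0) (d' := 0). rewrite length_map, length_seq; auto.
  intros n Hn. rewrite length_map, length_seq in Hn.
  rewrite <- (nth_nth_nth_map l 0 (seq 0 (length l)) (dn:=0)) by (left; rewrite length_seq; auto). rewrite seq_nth by auto. auto.
Qed.

Lemma C_sel k m f (sigma : nat -> nat) : CP k f -> (forall i, i < k -> sigma i < m) ->
  CP m (fun ys => f (map (fun i => nth (sigma i) ys 0) (seq 0 k))).
Proof.
  intros Hf Hs. eapply C_ext.
  - apply (C_comp m k f (map (fun i => fun ys => nth (sigma i) ys 0) (seq 0 k)) Hf).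
    + rewrite length_map, length_seq; auto.
    + apply Forall_forall. intros g Hg. apply in_map_iff in Hg. destruct Hg as [i [<- Hi]].
      apply in_seq in Hi. apply C_proj. apply Hs; lia.
  - intros ys _. cbv beta. rewrite map_map. auto.
Qed.

Lemma C_tl k f : CP k f -> CP (S k) (fun ys => f (tl ys)).
Proof.
  intros Hf. eapply C_ext. apply (C_sel k (S k) f S Hf). intros; lia.
  intros [|y ys] Hl; [discriminate|]. simpl in Hl. injection Hl as Hl. simpl. f_equal.
  change (map (fun i => nth i ys 0) (seq 0 k) = ys). rewrite <- Hl. apply map_nth_seq.
Qed.

Lemma C_shift k f : CP (S k) f -> CP (S (S k)) (fun ys => f (hd 0 ys :: tl (tl ys))).
Proof.
  intros Hf. eapply C_ext. apply (C_sel (S k) (S (S k)) f (fun i => match i with 0 => 0 | S i => S (S i) end) Hf).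
  intros [|i]; lia.
  intros [|y [|y' ys]] Hl; try discriminate. simpl in Hl. injection Hl as Hl. simpl. f_equal. f_equal.
  rewrite <- seq_shift, map_map. 
  change (map (fun i => nth i ys 0) (seq 0 k) = ys). rewrite <- Hl. apply map_nth_seq.
Qed.

Lemma C_cons k f g : CP (S k) f -> CP k g -> CP k (fun ys => f (g ys :: ys)).
Proof.
  intros Hf Hg. eapply C_ext.
  - apply (C_comp k (S k) f (g :: map (fun i => fun ys => nth i ys 0) (seq 0 k)) Hf).
    + simpl. rewrite length_map, length_seq; auto.
    + constructor; auto. apply Forall_forall. intros h Hh. apply in_map_iff in Hh. destruct Hh as [i [<- Hi]].
      apply in_seq in Hi. apply C_proj. lia.
  - intros ys Hl. simpl. f_equal. f_equal. rewrite map_map. rewrite <- Hl. apply map_nth_seq.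
Qed.

Fixpoint bex (P : nat -> nat) (n : nat) : nat :=
  match n with 0 => 0 | S n' => orn (bex P n') (P n') end.
Fixpoint bsum (P : nat -> nat) (n : nat) : nat :=
  match n with 0 => 0 | S n' => bsum P n' + P n' end.

Lemma C_bex k P : CP (S k) P -> CP (S k) (fun xs => bex (fun i => P (i :: tl xs)) (hd 0 xs)).
Proof.
  intros HP.
  assert (H := C_prim k (fun _ => 0) (fun ys => orn (nth 1 ys 0) (P (hd 0 ys :: tl (tl ys)))) (C_zero k)).
  eapply C_ext; [apply H|].
  - apply (C_app2 _ orn). auto with cdb. apply C_proj; lia. apply C_shift; auto.
  - intros [|n ps] _; simpl; [auto|]. induction n; simpl; try rewrite IHn; auto.
Qed.

Lemma C_bsum k P : CP (S k) P -> CP (S k) (fun xs => bsum (fun i => P (i :: tl xs)) (hd 0 xs)).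
Proof.
  intros HP.
  assert (H := C_prim k (fun _ => 0) (fun ys => nth 1 ys 0 + P (hd 0 ys :: tl (tl ys))) (C_zero k)).
  eapply C_ext; [apply H|].
  - apply (C_app2 _ Nat.add). auto with cdb. apply C_proj; lia. apply C_shift; auto.
  - intros [|n ps] _; simpl; [auto|]. induction n; simpl; try rewrite IHn; auto.
Qed.

Lemma C_bex_gen k P g : CP (S k) P -> CP k g -> CP k (fun xs => bex (fun i => P (i :: xs)) (g xs)).
Proof.
  intros HP Hg. eapply C_ext. apply (C_cons k _ g (C_bex k P HP) Hg). intros; simpl; auto.
Qed.
Lemma C_bsum_gen k P g : CP (S k) P -> CP k g -> CP k (fun xs => bsum (fun i => P (i :: xs)) (g xs)).
Proof.
  intros HP Hg. eapply C_ext. apply (C_cons k _ g (C_bsum k P HP) Hg). intros; simpl; auto.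
Qed.

Lemma sg_orn a b : orn a b = sg (a + b). Proof. reflexivity. Qed.

Lemma bex_spec P n : bex P n <> 0 <-> exists i, i < n /\ P i <> 0.
Proof.
  induction n; simpl. split; [lia|intros [i [Hi _]]; lia].
  unfold orn. destruct (bex P n) eqn:E; destruct (P n) eqn:E2; simpl.
  - split; [lia|]. intros [i [Hi Hp]]. destruct (Nat.eq_dec i n); [subst; congruence|].
    assert (exists i, i < n /\ P i <> 0) by (exists i; split; [lia|auto]). apply IHn in H; lia.
  - split; [intros; exists n; split; [lia|congruence]|lia].
  - split; [intros; destruct IHn as [IH _]; destruct IH as [i [? ?]]; [lia|exists i; split; [lia|auto]]|lia].
  - split; [intros; exists n; split; [lia|congruence]|lia].
Qed.

Lemma bex_01 P n : bex P n = 0 \/ bex P n = 1.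
Proof. destruct n; simpl; [auto|]. unfold orn, sg. destruct (bex P n + P n); auto. Qed.

Open Scope nat_scope.

Definition T (s : nat) := s * S s / 2.
Lemma T_S s : T (S s) = T s + S s.
Proof. unfold T. replace (S s * S (S s)) with (s * S s + S s * 2) by lia. rewrite Nat.div_add; lia. Qed.
Lemma T_mono s s' : s <= s' -> T s <= T s'.
Proof. induction 1; auto. rewrite T_S; lia. Qed.
Lemma cpair_T a b : cpair a b = T (a + b) + b.
Proof. reflexivity. Qed.

Lemma cpair_inj a b a' b' : cpair a b = cpair a' b' -> a = a' /\ b = b'.
Proof.
  rewrite !cpair_T. intros H.
  assert (a + b = a' + b').
  { destruct (Nat.lt_trichotomy (a+b) (a'+b')) as [Hl|[Hl|Hl]]; auto.
    - assert (T (S (a+b)) <= T (a' + b')) by (apply T_mono; lia). rewrite T_S in H0. lia.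
    - assert (T (S (a'+b')) <= T (a + b)) by (apply T_mono; lia). rewrite T_S in H0. lia. }
  rewrite H0 in H. lia.
Qed.

Lemma cpair_S0 b : cpair (S b) 0 = S (cpair 0 b).
Proof. rewrite !cpair_T. replace (S b + 0) with (S b) by lia. rewrite T_S. simpl. lia. Qed.
Lemma cpair_SS a b : cpair a (S b) = S (cpair (S a) b).
Proof. rewrite !cpair_T. replace (a + S b) with (S a + b) by lia. lia. Qed.

Fixpoint up (z : nat) : nat * nat :=
  match z with
  | 0 => (0, 0)
  | S z' => match up z' with (0, b) => (S b, 0) | (S a, b) => (a, S b) end
  end.
Lemma up_cpair z : cpair (fst (up z)) (snd (up z)) = z.
Proof.
  induction z; [reflexivity|]. simpl. destruct (up z) as [[|a] b]; simpl in *.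
  - rewrite cpair_S0; auto.
  - rewrite cpair_SS; auto.
Qed.
Definition pfst z := fst (up z).
Definition psnd z := snd (up z).
Lemma cpair_fst a b : pfst (cpair a b) = a.
Proof. unfold pfst. pose proof (up_cpair (cpair a b)). apply cpair_inj in H. tauto. Qed.
Lemma cpair_snd a b : psnd (cpair a b) = b.
Proof. unfold psnd. pose proof (up_cpair (cpair a b)). apply cpair_inj in H. tauto. Qed.
Lemma cpair_eta z : cpair (pfst z) (psnd z) = z.
Proof. apply up_cpair. Qed.
Lemma cpair_ge_l a b : a <= cpair a b.
Proof. rewrite cpair_T. assert (a <= T (a+b)). { destruct (a+b) eqn:E. lia. unfold T.
  apply Nat.div_le_lower_bound; lia. } lia. Qed.
Lemma cpair_ge_r a b : b <= cpair a b.
Proof. rewrite cpair_T. lia. Qed.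
Lemma cpair_mono a b a' b' : a <= a' -> b <= b' -> cpair a b <= cpair a' b'.
Proof. intros. rewrite !cpair_T. assert (T (a+b) <= T (a'+b')) by (apply T_mono; lia). lia. Qed.
Lemma cpair_lt_r a b b' : b < b' -> cpair a b < cpair a b'.
Proof. intros. rewrite !cpair_T. assert (T (a+b) <= T (a+b')) by (apply T_mono; lia). lia. Qed.
Lemma pfst_le z : pfst z <= z.
Proof. rewrite <- (cpair_eta z) at 2. apply cpair_ge_l. Qed.
Lemma psnd_le z : psnd z <= z.
Proof. rewrite <- (cpair_eta z) at 2. apply cpair_ge_r. Qed.

Lemma C_pfst : CP1 pfst.
Proof.
  apply (C_mu 1 (fun xs => isz (bex (fun b => eqbn (cpair (nth 0 xs 0) b) (nth 1 xs 0)) (S (nth 1 xs 0))))).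
  - eapply C_ext. apply (C_app1 2 isz). auto with cdb.
    apply (C_bex_gen 2 (fun ys => eqbn (cpair (nth 1 ys 0) (nth 0 ys 0)) (nth 2 ys 0)) (fun xs => S (nth 1 xs 0))).
    cs. cs. intros; reflexivity.
  - intros ps Hl. cbv beta. change (nth 0 (?x :: ps) 0) with x. change (nth 1 (?x :: ps) 0) with (nth 0 ps 0). set (z := nth 0 ps 0). split.
    + assert (bex (fun b => eqbn (cpair (pfst z) b) z) (S z) <> 0).
      { apply bex_spec. exists (psnd z). split. pose proof (psnd_le z); lia.
        unfold eqbn. rewrite cpair_eta, Nat.eqb_refl. simpl; lia. }
      revert H. generalize (bex (fun b => eqbn (cpair (pfst z) b) z) (S z)). intros [|v] H; simpl; [lia|auto].
    + intros a Ha.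
      destruct (bex (fun b => eqbn (cpair a b) z) (S z)) eqn:E; simpl; [lia|].
      intros _. exfalso. assert (Hx : bex (fun b => eqbn (cpair a b) z) (S z) <> 0) by (intros H'; rewrite H' in E; discriminate).
      apply bex_spec in Hx. destruct Hx as [b [_ Hb]]. unfold eqbn in Hb.
      destruct (Nat.eqb_spec (cpair a b) z); simpl in Hb; [|lia].
      rewrite <- (cpair_eta z) in e. apply cpair_inj in e. lia.
Qed.
#[export] Hint Resolve C_pfst : cdb.

Lemma C_psnd : CP1 psnd.
Proof.
  apply (C_mu 1 (fun xs => isz (eqbn (cpair (pfst (nth 1 xs 0)) (nth 0 xs 0)) (nth 1 xs 0)))).
  - cs.
  - intros ps Hl. simpl. set (z := nth 0 ps 0). split.
    + unfold eqbn. rewrite cpair_eta, Nat.eqb_refl. auto.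
    + intros b Hb. unfold eqbn. destruct (Nat.eqb_spec (cpair (pfst z) b) z); simpl; [|lia].
      rewrite <- (cpair_eta z) in e at 2. apply cpair_inj in e. lia.
Qed.
#[export] Hint Resolve C_psnd : cdb.

Open Scope nat_scope.


Lemma bex_ext P P' n : (forall i, i < n -> P i = P' i) -> bex P n = bex P' n.
Proof. induction n; simpl; intros; auto. rewrite IHn, H; auto. Qed.
Lemma bsum_ext P P' n : (forall i, i < n -> P i = P' i) -> bsum P n = bsum P' n.
Proof. induction n; simpl; intros; auto. rewrite IHn, H; auto. Qed.

Lemma C_bex2 (Q : nat -> nat -> nat) : CP1 (fun w => Q (pfst w) (psnd w)) ->
  CP2 (fun a b => bex (fun i => Q i b) a).
Proof.
  intros HQ. assert (H : CP 2 (fun ys => Q (pfst (cpair (nth 0 ys 0) (nth 1 ys 0))) (psnd (cpair (nth 0 ys 0) (nth 1 ys 0))))).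
  { apply (C_app1 2 (fun w => Q (pfst w) (psnd w))); auto. cs. }
  eapply C_ext. apply (C_bex 1 _ H).
  intros [|a [|b [|]]] Hl; try discriminate. simpl. apply bex_ext. intros.
  rewrite cpair_fst, cpair_snd; auto.
Qed.

Lemma C_bsum2 (Q : nat -> nat -> nat) : CP1 (fun w => Q (pfst w) (psnd w)) ->
  CP2 (fun a b => bsum (fun i => Q i b) a).
Proof.
  intros HQ. assert (H : CP 2 (fun ys => Q (pfst (cpair (nth 0 ys 0) (nth 1 ys 0))) (psnd (cpair (nth 0 ys 0) (nth 1 ys 0))))).
  { apply (C_app1 2 (fun w => Q (pfst w) (psnd w))); auto. cs. }
  eapply C_ext. apply (C_bsum 1 _ H).
  intros [|a [|b [|]]] Hl; try discriminate. simpl. apply bsum_ext. intros.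
  rewrite cpair_fst, cpair_snd; auto.
Qed.

Lemma C_bexU k (Q : nat -> nat -> nat) (bnd par : list nat -> nat) :
  CP1 (fun w => Q (pfst w) (psnd w)) -> CP k bnd -> CP k par ->
  CP k (fun xs => bex (fun i => Q i (par xs)) (bnd xs)).
Proof. intros HQ Hb Hp. apply (C_app2 k (fun a b => bex (fun i => Q i b) a) bnd par); auto. apply C_bex2; auto. Qed.
Lemma C_bsumU k (Q : nat -> nat -> nat) (bnd par : list nat -> nat) :
  CP1 (fun w => Q (pfst w) (psnd w)) -> CP k bnd -> CP k par ->
  CP k (fun xs => bsum (fun i => Q i (par xs)) (bnd xs)).
Proof. intros HQ Hb Hp. apply (C_app2 k (fun a b => bsum (fun i => Q i b) a) bnd par); auto. apply C_bsum2; auto. Qed.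

Lemma C_recU (F : nat -> nat -> nat) (f0 : nat -> nat) (G : nat -> nat -> nat -> nat) :
  (forall p, F 0 p = f0 p) -> (forall n p, F (S n) p = G n (F n p) p) -> CP1 f0 ->
  CP1 (fun w => G (pfst w) (pfst (psnd w)) (psnd (psnd w))) -> CP2 F.
Proof.
  intros H0 HS Hf HG. apply (C_rec2 F f0 G); auto.
  eapply C_ext with (f := fun xs => (fun w => G (pfst w) (pfst (psnd w)) (psnd (psnd w))) (cpair (nth 0 xs 0) (cpair (nth 1 xs 0) (nth 2 xs 0)))).
  apply (C_app1 3 _ (fun xs => cpair (nth 0 xs 0) (cpair (nth 1 xs 0) (nth 2 xs 0))) HG). cs.
  intros; cbv beta. rewrite ?cpair_fst, ?cpair_snd, ?cpair_fst, ?cpair_snd. auto.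
Qed.

Lemma C_muU (f : nat -> nat -> nat) (m : nat -> nat) :
  CP1 (fun w => f (pfst w) (psnd w)) ->
  (forall z, f (m z) z = 0 /\ forall y, y < m z -> f y z <> 0) -> CP1 m.
Proof.
  intros Hf Hm. apply (C_mu 1 (fun xs => f (nth 0 xs 0) (nth 1 xs 0))).
  - eapply C_ext with (f := fun xs => (fun w => f (pfst w) (psnd w)) (cpair (nth 0 xs 0) (nth 1 xs 0))).
    apply (C_app1 2 _ (fun xs => cpair (nth 0 xs 0) (nth 1 xs 0)) Hf). cs.
    intros; cbv beta. rewrite cpair_fst, cpair_snd; auto.
  - intros ps _. simpl. apply Hm.
Qed.

Open Scope nat_scope.

Lemma CP2_packed g : CP1 (fun w => g (pfst w) (psnd w)) -> CP2 g.
Proof. intros H. eapply C_ext with (f := fun xs => (fun w => g (pfst w) (psnd w)) (cpair (nth 0 xs 0) (nth 1 xs 0))).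
  apply (C_app1 2 _ (fun xs => cpair (nth 0 xs 0) (nth 1 xs 0)) H). cs.
  intros; cbv beta; rewrite cpair_fst, cpair_snd; auto. Qed.

Definition hd_c c := pfst (pred c).
Definition tl_c c := psnd (pred c).
Lemma C_hd_c : CP1 hd_c. Proof. unfold hd_c; cs1. Qed.
Lemma C_tl_c : CP1 tl_c. Proof. unfold tl_c; cs1. Qed.
#[export] Hint Resolve C_hd_c C_tl_c : cdb.
Definition drop_c n c := Nat.iter n tl_c c.
Lemma C_drop_c : CP2 drop_c.
Proof. apply (C_rec2 _ (fun c => c) (fun n r c => tl_c r)); auto; cs1. Qed.
#[export] Hint Resolve C_drop_c : cdb.
Definition nth_c i c := hd_c (drop_c i c).
Lemma C_nth_c : CP2 nth_c. Proof. unfold nth_c. cs1. Qed.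
#[export] Hint Resolve C_nth_c : cdb.
Definition len_c c := bsum (fun i => sg (drop_c i c)) c.
Lemma C_len_c : CP1 len_c.
Proof. unfold len_c, CP1. apply (C_bsumU 1 (fun i c => sg (drop_c i c))); cs1. Qed.
#[export] Hint Resolve C_len_c : cdb.

Fixpoint mkR (g : nat -> nat -> nat) (i q : nat) : nat :=
  match i with 0 => 0 | S i' => S (cpair (g (pfst q - S i') (psnd q)) (mkR g i' q)) end.
Definition mk g n p := mkR g n (cpair n p).
Lemma C_mkR g : CP2 g -> CP2 (mkR g).
Proof. intros Hg. apply (C_recU _ (fun _ => 0) (fun i r q => S (cpair (g (pfst q - S i) (psnd q)) r))); auto; cs1. Qed.
Lemma C_mk g : CP2 g -> CP2 (mk g).
Proof. intros Hg. pose proof (C_mkR g Hg). unfold mk. cs1. Qed.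

Lemma mkR_spec g n p i : i <= n -> mkR g i (cpair n p) = code_list (map (fun x => g x p) (seq (n - i) i)).
Proof.
  induction i; intros; simpl; auto. rewrite IHi by lia. rewrite cpair_fst, cpair_snd.
  replace (n - i) with (S (n - S i)) by lia. reflexivity.
Qed.
Lemma mk_spec g n p : mk g n p = code_list (map (fun x => g x p) (seq 0 n)).
Proof. unfold mk. rewrite mkR_spec by lia. rewrite Nat.sub_diag. auto. Qed.

Lemma hd_code x l : hd_c (code_list (x :: l)) = x.
Proof. unfold hd_c; simpl. apply cpair_fst. Qed.
Lemma tl_code x l : tl_c (code_list (x :: l)) = code_list l.
Proof. unfold tl_c; simpl. apply cpair_snd. Qed.
Lemma tl_c0 : tl_c 0 = 0. Proof. reflexivity. Qed.
Lemma hd_c0 : hd_c 0 = 0. Proof. reflexivity. Qed.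
Lemma drop_code n l : drop_c n (code_list l) = code_list (skipn n l).
Proof.
  revert l; induction n; intros l; auto. unfold drop_c in *. rewrite Nat.iter_succ_r.
  destruct l as [|x l].
  - simpl. rewrite tl_c0. specialize (IHn []). simpl in IHn. rewrite IHn. destruct n; auto.
  - rewrite tl_code. apply IHn.
Qed.
Lemma nth_code i l : nth_c i (code_list l) = nth i l 0.
Proof.
  unfold nth_c. rewrite drop_code. revert l; induction i; intros [|x l]; simpl; auto.
  all: try apply hd_code; try (rewrite skipn_nil; auto).
Qed.
Lemma code_len l : length l <= code_list l.
Proof. induction l; simpl; auto. pose proof (cpair_ge_r a (code_list l)). lia. Qed.
Lemma code_nil l : code_list l = 0 <-> l = [].
Proof. destruct l; simpl; split; intros; auto; discriminate. Qed.

Lemma bsum_ind L c : L <= c -> bsum (fun i => b2n (i <? L)) c = L.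
Proof.
  induction c; intros; simpl. lia.
  destruct (Nat.eq_dec L (S c)).
  - subst. rewrite bsum_ext with (P' := fun _ => 1). 2:{ intros. destruct (Nat.ltb_spec i (S c)); auto; lia. }
    clear. assert (forall n, bsum (fun _ => 1) n = n) by (induction n; simpl; lia). rewrite H.
    destruct (Nat.ltb_spec c (S c)); simpl; lia.
  - rewrite IHc by lia. destruct (Nat.ltb_spec c L); simpl; lia.
Qed.
Lemma len_code l : len_c (code_list l) = length l.
Proof.
  unfold len_c. rewrite bsum_ext with (P' := fun i => b2n (i <? length l)).
  apply bsum_ind, code_len.
  intros i _. rewrite drop_code. destruct (Nat.ltb_spec i (length l)).
  - destruct (skipn i l) eqn:E. apply (f_equal (@length nat)) in E. rewrite length_skipn in E. simpl in E. lia. auto.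
  - rewrite skipn_all2 by lia. auto.
Qed.

Lemma code_surj c : exists l, code_list l = c.
Proof.
  induction c as [c IH] using lt_wf_ind. destruct c. exists []; auto.
  destruct (IH (psnd c)) as [l Hl]. pose proof (psnd_le c); lia.
  exists (pfst c :: l). simpl. rewrite Hl, cpair_eta. auto.
Qed.

Lemma C_min : CP2 Nat.min.
Proof. eapply C_ext with (f := fun xs => nth 0 xs 0 - (nth 0 xs 0 - nth 1 xs 0)). cs. intros; lia. Qed.
Lemma C_max : CP2 Nat.max.
Proof. eapply C_ext with (f := fun xs => nth 0 xs 0 + (nth 1 xs 0 - nth 0 xs 0)). cs. intros; lia. Qed.
#[export] Hint Resolve C_min C_max : cdb.
Definition take_c k c := mk nth_c (Nat.min k (len_c c)) c.
Lemma C_take_c : CP2 take_c.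
Proof. pose proof (C_mk nth_c C_nth_c). unfold take_c. cs1. Qed.
#[export] Hint Resolve C_take_c : cdb.
Lemma take_code k l : take_c k (code_list l) = code_list (firstn k l).
Proof.
  unfold take_c. rewrite mk_spec, len_code. f_equal.
  rewrite <- (map_nth_seq (firstn k l)). rewrite length_firstn. apply map_ext_in.
  intros i Hi. apply in_seq in Hi. rewrite nth_code. rewrite nth_firstn.
  destruct (Nat.ltb_spec i k); auto; lia.
Qed.

Lemma code_firstn_le k l : code_list (firstn k l) <= code_list l.
Proof.
  revert k; induction l; intros [|k]; simpl; try lia. apply le_n_S, cpair_mono; auto.
Qed.

Fixpoint Frep M L := match L with 0 => 0 | S L' => S (cpair M (Frep M L')) end.
Lemma C_Frep : CP2 Frep.
Proof.
  eapply C_ext with (f := fun xs => (fun L M => Frep M L) (nth 1 xs 0) (nth 0 xs 0)).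
  2: reflexivity. assert (CP2 (fun L M => Frep M L)).
  { apply (C_rec2 _ (fun _ => 0) (fun n r M => S (cpair M r))); auto; cs1. }
  apply (C_app2 2 (fun L M => Frep M L) (fun xs => nth 1 xs 0) (fun xs => nth 0 xs 0)); auto; cs.
Qed.
#[export] Hint Resolve C_Frep : cdb.
Lemma code_bound M l : (forall x, In x l -> x <= M) -> code_list l <= Frep M (length l).
Proof.
  induction l; simpl; intros; auto. apply le_n_S, cpair_mono; auto.
Qed.

Open Scope nat_scope.

Lemma bool_of_true (P : Prop) : bool_of P = true <-> P.
Proof. unfold bool_of. destruct (excluded_middle_informative P); split; auto; discriminate. Qed.

Lemma prefix_length q k : length (prefix q k) = k.
Proof. unfold prefix. rewrite length_map, length_seq. auto. Qed.
Lemma prefix_nth q k l : l < k -> nth l (prefix q k) 0 = q l.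
Proof. intros. unfold prefix. rewrite nth_indep with (d' := q 0) by (rewrite length_map, length_seq; auto).
  rewrite map_nth, seq_nth; auto. Qed.
Lemma prefix_ext q q' k : (forall i, i < k -> q i = q' i) -> prefix q k = prefix q' k.
Proof. intros H. unfold prefix. apply map_ext_in. intros i Hi. apply in_seq in Hi. apply H; lia. Qed.
Lemma firstn_prefix q k j : j <= k -> firstn j (prefix q k) = prefix q j.
Proof. intros. unfold prefix. rewrite firstn_map. f_equal.
  replace k with (j + (k - j)) by lia. rewrite seq_app, firstn_app, length_seq, Nat.sub_diag, firstn_O, app_nil_r.
  apply firstn_all2. rewrite length_seq; lia. Qed.

Lemma len_le c : len_c c <= c.
Proof. destruct (code_surj c) as [l <-]. rewrite len_code. apply code_len. Qed.

Definition Aset (cert : nat -> nat -> nat -> bool) (Nf : nat -> nat) (idx : nat) : nat :=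
  let n' := pfst idx in let cw := psnd idx in let len := len_c cw in
  if len =? S n' then
    S (bex (fun i => bex (fun l => b2n (cert (nth_c l cw) i l)) len) (Nf len))
  else 0.

Section Union.
Variable X : rep_space.
Variable Sset : nat -> X -> Prop.
Variable cert : nat -> nat -> nat -> bool.
Hypothesis sound : forall q x, delta X q x -> forall i l, cert (q l) i l = true -> Sset i x.
Hypothesis complete : forall q x, delta X q x -> forall i, Sset i x -> exists l, cert (q l) i l = true.

Definition Ufun (Nf : nat -> nat) (x : X) : Sierp :=
  bool_of (exists i, (exists L, i < Nf L) /\ Sset i x).

Lemma Arealizes Nf : (forall a b, a <= b -> Nf a <= Nf b) -> realizes (Aset cert Nf) (Ufun Nf).
Proof.
  intros Hm q x Hq.
  exists (fun n' => bex (fun i => bex (fun l => b2n (cert (q l) i l)) (S n')) (Nf (S n'))).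
  split.
  - intros n'. exists (S n'). split.
    + unfold Aset. rewrite cpair_fst, cpair_snd, len_code, prefix_length, Nat.eqb_refl. f_equal.
      apply bex_ext; intros i _. apply bex_ext; intros l Hl. rewrite nth_code, prefix_nth; auto.
    + intros j Hj. unfold Aset. rewrite cpair_fst, cpair_snd, len_code, prefix_length.
      destruct (Nat.eqb_spec j (S n')); [lia|auto].
  - unfold Sierp; cbn [delta]. unfold Ufun. rewrite bool_of_true. split.
    + intros [i [[L HL] HS]]. destruct (complete q x Hq i HS) as [l Hl].
      exists (L + l). apply bex_spec. exists i. split.
      * eapply Nat.lt_le_trans; [exact HL|]. apply Hm; lia.
      * apply bex_spec. exists l. split; [lia|]. rewrite Hl; simpl; lia.
    + intros [n' Hn]. apply bex_spec in Hn. destruct Hn as [i [Hi Hn]]. apply bex_spec in Hn.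
      destruct Hn as [l [Hl Hc]]. exists i. split; [eauto|]. apply (sound q x Hq i l).
      destruct (cert (q l) i l); auto.
Qed.

Lemma Acont Nf : (forall a b, a <= b -> Nf a <= Nf b) -> is_continuous (Ufun Nf).
Proof. intros. exists (Aset cert Nf). apply Arealizes; auto. Qed.

Lemma Aagree N idx : idx < N -> Aset cert (Nat.min N) idx = Aset cert (fun l => l) idx.
Proof.
  intros H. unfold Aset. pose proof (len_le (psnd idx)). pose proof (psnd_le idx).
  rewrite Nat.min_r by lia. auto.
Qed.

Variable hF : nat -> nat.
Hypothesis HF : realizes hF (IsFull X).

Definition searchc (N n0 k : nat) : Prop :=
  2 <= hF (cpair n0 (code_list (prefix (Aset cert (Nat.min N)) k))) /\
  forall k', k' < k -> hF (cpair n0 (code_list (prefix (Aset cert (Nat.min N)) k'))) = 0.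

Lemma search_exists : (forall x, exists i, Sset i x) -> exists N n0 k, searchc N n0 k.
Proof.
  intros Hall.
  set (U := exist _ (Ufun (fun l => l)) (Acont _ (fun a b H => H)) : cont_map X Sierp).
  destruct (HF (Aset cert (fun l => l)) U) as [r [Hr HU]].
  { simpl. apply Arealizes. auto. }
  assert (IsFull X U = true).
  { unfold IsFull. apply bool_of_true. intros x. simpl. unfold Ufun. apply bool_of_true.
    destruct (Hall x) as [i Hi]. exists i. split; [exists (S i); lia|auto]. }
  simpl in HU. apply HU in H. destruct H as [n0 Hn0].
  destruct (Hr n0) as [k [Hk1 Hk2]].
  exists k, n0, k. split.
  - rewrite (prefix_ext _ (Aset cert (fun l => l))) by (intros; apply Aagree; auto). lia.
  - intros k' Hk'. rewrite (prefix_ext _ (Aset cert (fun l => l))) by (intros; apply Aagree; lia). auto.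
Qed.

Lemma search_sound N n0 k : searchc N n0 k -> forall x, exists i, i < N /\ Sset i x.
Proof.
  intros [H1 H2].
  set (U := exist _ (Ufun (Nat.min N)) (Acont _ (fun a b H => Nat.min_le_compat_l a b N H)) : cont_map X Sierp).
  destruct (HF (Aset cert (Nat.min N)) U) as [r [Hr HU]].
  { simpl. apply Arealizes. intros; apply Nat.min_le_compat_l; auto. }
  destruct (Hr n0) as [k0 [Hk1 Hk2]].
  assert (k0 = k).
  { destruct (Nat.lt_trichotomy k0 k) as [Hl|[Hl|Hl]]; auto.
    - apply H2 in Hl. lia.
    - apply Hk2 in Hl. lia. }
  subst k0. simpl in HU. assert (IsFull X U = true) by (apply HU; exists n0; lia).
  unfold IsFull in H. rewrite bool_of_true in H. intros x. specialize (H x). simpl in H.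
  unfold Ufun in H. rewrite bool_of_true in H. destruct H as [i [[L HL] HS]].
  exists i. split; auto. lia.
Qed.
End Union.

Open Scope nat_scope.

Lemma INR2pow k : INR (2 ^ k) = (2 ^ k)%R.
Proof. rewrite pow_INR. simpl. try (f_equal; lra). Qed.
Lemma pow2_pos k : (0 < 2 ^ k)%R.
Proof. apply pow_lt. lra. Qed.
Lemma inv_pow2_pos k : (0 < / 2 ^ k)%R.
Proof. apply Rinv_0_lt_compat, pow2_pos. Qed.
Lemma inv_pow2_S k : (/ 2 ^ S k = / 2 ^ k / 2)%R.
Proof. simpl. rewrite Rinv_mult. lra. Qed.
Lemma inv_pow2_add a b : (/ 2 ^ (a + b) = / 2 ^ a * / 2 ^ b)%R.
Proof. rewrite pow_add, Rinv_mult. auto. Qed.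
Lemma inv_pow2_le a b : a <= b -> (/ 2 ^ b <= / 2 ^ a)%R.
Proof. intros H. replace b with (a + (b - a)) by lia. rewrite inv_pow2_add.
  assert (/ 2 ^ (b - a) <= 1)%R. { pose proof (pow_R1_Rle 2 (b - a) ltac:(lra)). rewrite <- Rinv_1. apply Rinv_le_contravar; lra. }
  pose proof (inv_pow2_pos a). nra. Qed.

Lemma small_pow (eps : R) : (0 < eps)%R -> exists n, (/ 2 ^ n < eps)%R.
Proof.
  intros He. destruct (pow_lt_1_zero (/ 2) ltac:(rewrite Rabs_pos_eq; lra) eps He) as [N HN].
  exists N. specialize (HN N (le_n _)). rewrite pow_inv, Rabs_pos_eq in HN; auto.
  left; apply inv_pow2_pos.
Qed.

Lemma frac_lt A B Cc l Rr :
  ((INR A - INR B) / INR (S Cc) + 2 * / 2 ^ l < / 2 ^ Rr)%R <->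
  A * 2 ^ (l + Rr) + 2 ^ (Rr + 1) * S Cc < S Cc * 2 ^ l + B * 2 ^ (l + Rr).
Proof.
  assert (HD : (0 < INR (S Cc))%R) by (apply lt_0_INR; lia).
  pose proof (pow2_pos l) as P1. pose proof (pow2_pos Rr) as P2.
  split; intros H.
  - apply INR_lt. rewrite !plus_INR, !mult_INR, !INR2pow, !pow_add. simpl (2^1)%R.
    apply Rmult_lt_compat_r with (r := (INR (S Cc) * 2 ^ l * 2 ^ Rr)%R) in H; [|apply Rmult_lt_0_compat; [apply Rmult_lt_0_compat|]; lra].
    replace (((INR A - INR B) / INR (S Cc) + 2 * / 2 ^ l) * (INR (S Cc) * 2 ^ l * 2 ^ Rr))%R
      with ((INR A - INR B) * 2 ^ l * 2 ^ Rr + 2 * INR (S Cc) * 2 ^ Rr)%R in H by (field; lra).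
    replace (/ 2 ^ Rr * (INR (S Cc) * 2 ^ l * 2 ^ Rr))%R with (INR (S Cc) * 2 ^ l)%R in H by (field; lra).
    lra.
  - apply lt_INR in H. rewrite !plus_INR, !mult_INR, !INR2pow, !pow_add in H. simpl (2^1)%R in H.
    apply Rmult_lt_reg_r with (r := (INR (S Cc) * 2 ^ l * 2 ^ Rr)%R); [apply Rmult_lt_0_compat; [apply Rmult_lt_0_compat|]; lra|].
    replace (((INR A - INR B) / INR (S Cc) + 2 * / 2 ^ l) * (INR (S Cc) * 2 ^ l * 2 ^ Rr))%R
      with ((INR A - INR B) * 2 ^ l * 2 ^ Rr + 2 * INR (S Cc) * 2 ^ Rr)%R by (field; lra).
    replace (/ 2 ^ Rr * (INR (S Cc) * 2 ^ l * 2 ^ Rr))%R with (INR (S Cc) * 2 ^ l)%R by (field; lra).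
    lra.
Qed.

Lemma frac_le A B Cc k :
  ((INR A - INR B) / INR (S Cc) <= 7 * / 2 ^ k)%R <-> A * 2 ^ k <= 7 * S Cc + B * 2 ^ k.
Proof.
  assert (HD : (0 < INR (S Cc))%R) by (apply lt_0_INR; lia).
  pose proof (pow2_pos k) as P1.
  split; intros H.
  - apply INR_le. rewrite !plus_INR, !mult_INR, !INR2pow.
    apply Rmult_le_compat_r with (r := (INR (S Cc) * 2 ^ k)%R) in H; [|nra].
    replace ((INR A - INR B) / INR (S Cc) * (INR (S Cc) * 2 ^ k))%R with ((INR A - INR B) * 2 ^ k)%R in H by (field; lra).
    replace (7 * / 2 ^ k * (INR (S Cc) * 2 ^ k))%R with (7 * INR (S Cc))%R in H by (field; lra).
    simpl (INR 7). lra.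
  - apply le_INR in H. rewrite !plus_INR, !mult_INR, !INR2pow in H.
    apply Rmult_le_reg_r with (r := (INR (S Cc) * 2 ^ k)%R); [nra|].
    replace ((INR A - INR B) / INR (S Cc) * (INR (S Cc) * 2 ^ k))%R with ((INR A - INR B) * 2 ^ k)%R by (field; lra).
    replace (7 * / 2 ^ k * (INR (S Cc) * 2 ^ k))%R with (7 * INR (S Cc))%R by (field; lra).
    simpl (INR 7) in H. lra.
Qed.

Open Scope nat_scope.

Section Metric.
Variable M : cmetric_space.
Variables ha hb hc : nat -> nat.
Hypothesis Happ : forall i j n, let m := cpair (cpair i j) n in
  (Rabs ((INR (ha m) - INR (hb m)) / INR (S (hc m)) - cm_dist M (cm_dense M i) (cm_dense M j)) <= / 2 ^ n)%R.

Local Notation d := (cm_dense M).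
Local Notation dist := (cm_dist M).

Definition ap i j n := let m := cpair (cpair i j) n in ((INR (ha m) - INR (hb m)) / INR (S (hc m)))%R.
Lemma ap_err i j n : (Rabs (ap i j n - dist (d i) (d j)) <= / 2 ^ n)%R.
Proof. apply Happ. Qed.
Lemma ap_lo i j n : (dist (d i) (d j) - / 2 ^ n <= ap i j n)%R.
Proof. pose proof (ap_err i j n). pose proof (Rle_abs (ap i j n - dist (d i) (d j))).
  pose proof (Rle_abs (- (ap i j n - dist (d i) (d j)))). rewrite Rabs_Ropp in H1. lra. Qed.
Lemma ap_hi i j n : (ap i j n <= dist (d i) (d j) + / 2 ^ n)%R.
Proof. pose proof (ap_err i j n). pose proof (Rle_abs (ap i j n - dist (d i) (d j))).
  pose proof (Rle_abs (- (ap i j n - dist (d i) (d j)))). rewrite Rabs_Ropp in H1. lra. Qed.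

Lemma dtri x y z : (dist x z <= dist x y + dist y z)%R. Proof. apply cm_dist_tri. Qed.
Lemma dsym x y : dist x y = dist y x. Proof. apply cm_dist_sym. Qed.

Definition cert_ball (Rr a i l : nat) : bool :=
  let m := cpair (cpair a i) l in
  ha m * 2 ^ (l + Rr) + 2 ^ (Rr + 1) * S (hc m) <? S (hc m) * 2 ^ l + hb m * 2 ^ (l + Rr).
Lemma cert_ball_iff Rr a i l : cert_ball Rr a i l = true <-> (ap a i l + 2 * / 2 ^ l < / 2 ^ Rr)%R.
Proof. unfold cert_ball, ap. rewrite Nat.ltb_lt. symmetry. apply frac_lt. Qed.

Definition Sball (Rr i : nat) (x : cauchy_rep M) : Prop := (dist (d i) x < / 2 ^ Rr)%R.

Lemma ball_sound : forall q x, delta (cauchy_rep M) q x ->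
  forall i l, cert_ball (S (S 0)) (q l) i l = true -> Sball 2 i x.
Abort.

Lemma ball_sound Rr : forall q (x : cauchy_rep M), delta (cauchy_rep M) q x ->
  forall i l, cert_ball Rr (q l) i l = true -> Sball Rr i x.
Proof.
  intros q x Hq i l Hc. apply cert_ball_iff in Hc. simpl in Hq. unfold Sball.
  pose proof (Hq l). pose proof (ap_lo (q l) i l).
  pose proof (dtri (d i) (d (q l)) x). rewrite (dsym (d i) (d (q l))) in H1. lra.
Qed.

Lemma ball_complete Rr : forall q (x : cauchy_rep M), delta (cauchy_rep M) q x ->
  forall i, Sball Rr i x -> exists l, cert_ball Rr (q l) i l = true.
Proof.
  intros q x Hq i Hs. simpl in Hq. unfold Sball in Hs.
  destruct (small_pow ((/ 2 ^ Rr - dist (d i) x) / 4)) as [l Hl]. lra.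
  exists l. apply cert_ball_iff. pose proof (Hq l). pose proof (ap_hi (q l) i l).
  pose proof (dtri (d (q l)) x (d i)). rewrite (dsym x (d i)) in H1. lra.
Qed.

Lemma ball_cover Rr : forall x : cauchy_rep M, exists i, Sball Rr i x.
Proof.
  intros x. destruct (cm_dense_prop M x (/ 2 ^ Rr) (inv_pow2_pos Rr)) as [i Hi].
  exists i. unfold Sball. rewrite dsym. auto.
Qed.

Definition cons_ok (a b l : nat) : bool :=
  let m := cpair (cpair a b) (l + 4) in
  ha m * 2 ^ (l + 4) <=? 7 * S (hc m) + hb m * 2 ^ (l + 4).
Lemma cons_ok_iff a b l : cons_ok a b l = true <-> (ap a b (l + 4) <= 7 * / 2 ^ (l + 4))%R.
Proof. unfold cons_ok, ap. rewrite Nat.leb_le. symmetry. apply frac_le. Qed.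
Lemma cons_ok_sound a b l : cons_ok a b l = true -> (dist (d a) (d b) <= / 2 ^ S l)%R.
Proof.
  intros H. apply cons_ok_iff in H. pose proof (ap_lo a b (l + 4)).
  assert (/ 2 ^ (l + 4) = / 2 ^ S l / 8)%R.
  { replace (l + 4) with (S l + 3) by lia. rewrite inv_pow2_add. simpl. lra. }
  pose proof (inv_pow2_pos (S l)). lra.
Qed.
Lemma cons_ok_complete a b l : (dist (d a) (d b) < 6 * / 2 ^ (l + 4))%R -> cons_ok a b l = true.
Proof.
  intros H. apply cons_ok_iff. pose proof (ap_hi a b (l + 4)). lra.
Qed.

(* completeness of M from computable compactness *)
Definition Sfar (e : nat -> nat) (n : nat) (x : cauchy_rep M) : Prop := (/ 2 ^ n < dist (d (e n)) x)%R.
Definition cert_far (e : nat -> nat) (a n l : nat) : bool :=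
  bool_of (/ 2 ^ n + 2 * / 2 ^ l < ap a (e n) l)%R.

Lemma far_sound e : forall q (x : cauchy_rep M), delta (cauchy_rep M) q x ->
  forall i l, cert_far e (q l) i l = true -> Sfar e i x.
Proof.
  intros q x Hq i l Hc. unfold cert_far in Hc. rewrite bool_of_true in Hc. simpl in Hq. unfold Sfar.
  pose proof (Hq l). pose proof (ap_hi (q l) (e i) l).
  pose proof (dtri (d (q l)) x (d (e i))). rewrite (dsym x (d (e i))) in H1. lra.
Qed.
Lemma far_complete e : forall q (x : cauchy_rep M), delta (cauchy_rep M) q x ->
  forall i, Sfar e i x -> exists l, cert_far e (q l) i l = true.
Proof.
  intros q x Hq i Hs. simpl in Hq. unfold Sfar in Hs.
  destruct (small_pow ((dist (d (e i)) x - / 2 ^ i) / 4)) as [l Hl]. lra.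
  exists l. unfold cert_far. apply bool_of_true. pose proof (Hq l). pose proof (ap_lo (q l) (e i) l).
  pose proof (dtri (d (e i)) (d (q l)) x). rewrite (dsym (d (e i)) (d (q l))) in H1. lra.
Qed.

Variable hF : nat -> nat.
Hypothesis HF : realizes hF (IsFull (cauchy_rep M)).

Lemma chain_dist (e : nat -> nat) : (forall n, dist (d (e n)) (d (e (S n))) <= / 2 ^ S n)%R ->
  forall n k : nat, (dist (d (e n)) (d (e (n + k)%nat)) <= / 2 ^ n - / 2 ^ (n + k)%nat)%R.
Proof.
  intros He n k. induction k.
  - rewrite Nat.add_0_r. assert (dist (d (e n)) (d (e n)) = 0%R) by (apply cm_dist_eq0; auto). lra.
  - pose proof (dtri (d (e n)) (d (e (n + k))) (d (e (n + S k)))).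
    replace (n + S k) with (S (n + k)) in * by lia. pose proof (He (n + k)).
    rewrite inv_pow2_S in *. lra.
Qed.

Lemma complete_M (e : nat -> nat) : (forall n, dist (d (e n)) (d (e (S n))) <= / 2 ^ S n)%R ->
  exists x : cauchy_rep M, forall n, (dist (d (e n)) x <= / 2 ^ n)%R.
Proof.
  intros He. apply NNPP. intros Hno.
  assert (Hall : forall x : cauchy_rep M, exists i, Sfar e i x).
  { intros x. apply NNPP; intros Hx. apply Hno. exists x. intros n. apply Rnot_lt_le.
    intros Hl. apply Hx. exists n. exact Hl. }
  destruct (search_exists (cauchy_rep M) (Sfar e) (cert_far e) (far_sound e) (far_complete e) hF HF Hall)
    as [N [n0 [k Hs]]].
  destruct (search_sound _ _ _ (far_sound e) (far_complete e) hF HF N n0 k Hs (d (e N))) as [i [Hi Hf]].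
  unfold Sfar in Hf. pose proof (chain_dist e He i (N - i)). replace (i + (N - i)) with N in H by lia.
  pose proof (inv_pow2_pos N). lra.
Qed.

End Metric.

Open Scope nat_scope.

Lemma C_hd k f : CP k (fun ys => nth 0 (f ys) 0) -> CP k (fun ys => hd 0 (f ys)).
Proof. intros H; eapply C_ext; [exact H|]. intros ys _. cbv beta. destruct (f ys); auto. Qed.
Lemma C_nth_tl k j f : CP k (fun ys => nth (S j) (f ys) 0) -> CP k (fun ys => nth j (tl (f ys)) 0).
Proof. intros H; eapply C_ext; [exact H|]. intros ys _. cbv beta. destruct (f ys); simpl; auto. destruct j; auto. Qed.

Ltac cz := cbv beta zeta; first
 [ apply C_proj; simpl; lia
 | match goal with |- CP ?k (fun ys => hd 0 (@?f ys)) => apply (C_hd k f); cz end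
 | match goal with |- CP ?k (fun ys => nth ?j (tl (@?f ys)) 0) => apply (C_nth_tl k j f); cz end
 | match goal with |- CP ?k (fun xs => bex (fun i => @?B i xs) (@?G xs)) =>
     apply (C_bex_gen k (fun ys => B (hd 0 ys) (tl ys)) G); [cz|cz] end
 | match goal with |- CP ?k (fun xs => bsum (fun i => @?B i xs) (@?G xs)) =>
     apply (C_bsum_gen k (fun ys => B (hd 0 ys) (tl ys)) G); [cz|cz] end
 | match goal with |- CP _ (fun _ => ?c) => apply C_const end
 | match goal with |- CP ?k (fun xs => b2n (Nat.ltb (@?a xs) (@?b xs))) =>
      apply (C_app2 k ltbn a b); [exact C_ltbn|cz|cz] end
 | match goal with |- CP ?k (fun xs => b2n (Nat.leb (@?a xs) (@?b xs))) =>
      apply (C_app2 k lebn a b); [exact C_lebn|cz|cz] end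
 | match goal with |- CP ?k (fun xs => ?F (@?g1 xs) (@?g2 xs) (@?g3 xs) (@?g4 xs)) =>
      apply (C_app4 k F g1 g2 g3 g4); [solve [eauto with cdb]|cz|cz|cz|cz] end
 | match goal with |- CP ?k (fun xs => ?F (@?g1 xs) (@?g2 xs) (@?g3 xs)) =>
      apply (C_app3 k F g1 g2 g3); [solve [eauto with cdb]|cz|cz|cz] end
 | match goal with |- CP ?k (fun xs => ?F (@?g1 xs) (@?g2 xs)) =>
      apply (C_app2 k F g1 g2); [solve [eauto with cdb]|cz|cz] end
 | match goal with |- CP ?k (fun xs => ?F (@?g1 xs)) =>
      apply (C_app1 k F g1); [solve [eauto with cdb]|cz] end ].
Ltac cz1 := unfold CP1, CP2, CP3, CP4; cbv beta zeta; cz.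

Lemma test_bex : CP2 (fun a b => bex (fun i => bex (fun l => ltbn (i + l) b) a) (b + a)).
Proof. cz1. Qed.

Lemma least_exists (P : nat -> Prop) : (exists n, P n) -> exists n, P n /\ forall m, m < n -> ~ P m.
Proof.
  intros [n Hn]. induction n as [n IH] using lt_wf_ind.
  destruct (classic (exists m, m < n /\ P m)) as [[m [Hm HPm]]|Hno].
  - apply (IH m Hm HPm).
  - exists n. split; auto. intros m Hm HPm. apply Hno. eauto.
Qed.
Definition least (P : nat -> Prop) : nat :=
  match excluded_middle_informative (exists n, P n) with
  | left H => proj1_sig (constructive_indefinite_description _ (least_exists P H))
  | right _ => 0 end.
Lemma least_spec P : (exists n, P n) -> P (least P) /\ forall m, m < least P -> ~ P m.
Proof.
  intros H. unfold least. destruct (excluded_middle_informative (exists n, P n)); [|tauto].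
  destruct (constructive_indefinite_description _ _) as [x Hx]. simpl. auto.
Qed.

Lemma ite_if (b : bool) x y : (if b then x else y) = ite (b2n b) x y.
Proof. destruct b; auto. Qed.

Section Alg.
Variables ha hb hc hF : nat -> nat.
Hypothesis Cha : CP1 ha.
Hypothesis Chb : CP1 hb.
Hypothesis Chc : CP1 hc.
Hypothesis ChF : CP1 hF.
Local Hint Resolve Cha Chb Chc ChF : cdb.

Definition Anet Rr N idx := ite (eqbn (len_c (psnd idx)) (S (pfst idx)))
  (S (bex (fun i => bex (fun l => b2n (cert_ball ha hb hc Rr (nth_c l (psnd idx)) i l)) (len_c (psnd idx)))
     (Nat.min N (len_c (psnd idx))))) 0.
Lemma C_Anet : CP3 Anet.
Proof. unfold Anet, cert_ball. cz1. Qed.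
Local Hint Resolve C_Anet : cdb.
Lemma Anet_eq Rr N idx : Anet Rr N idx = Aset (cert_ball ha hb hc Rr) (Nat.min N) idx.
Proof. unfold Anet, Aset. cbv zeta. rewrite ite_if. reflexivity. Qed.

Definition prefA Rr N k := mk (fun i p => Anet (pfst p) (psnd p) i) k (cpair Rr N).
Lemma C_prefA : CP3 prefA.
Proof.
  assert (CP2 (mk (fun i p => Anet (pfst p) (psnd p) i))) by (apply C_mk; cz1).
  unfold prefA. cz1.
Qed.
Local Hint Resolve C_prefA : cdb.
Lemma prefA_eq Rr N k : prefA Rr N k = code_list (prefix (Aset (cert_ball ha hb hc Rr) (Nat.min N)) k).
Proof.
  unfold prefA. rewrite mk_spec. unfold prefix. f_equal. apply map_ext. intros a.
  rewrite cpair_fst, cpair_snd, Anet_eq. auto.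
Qed.

Definition searchf Rr z :=
  andn (lebn 2 (hF (cpair (pfst (psnd z)) (prefA Rr (pfst z) (psnd (psnd z))))))
       (isz (bex (fun k' => sg (hF (cpair (pfst (psnd z)) (prefA Rr (pfst z) k')))) (psnd (psnd z)))).
Lemma C_searchf : CP2 searchf.
Proof. unfold searchf. cz1. Qed.
Local Hint Resolve C_searchf : cdb.

Definition zN Rr := least (fun z => searchf Rr z <> 0).
Definition Nt Rr := pfst (zN Rr).

Hypothesis Hex : forall Rr, exists z, searchf Rr z <> 0.
Lemma C_zN : CP1 zN.
Proof.
  apply (C_muU (fun y Rr => isz (searchf Rr y))).
  - cz1.
  - intros Rr. destruct (least_spec _ (Hex Rr)) as [H1 H2]. fold (zN Rr) in H1, H2. split.
    + destruct (searchf Rr (zN Rr)); simpl; auto. congruence.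
    + intros y Hy. specialize (H2 y Hy). destruct (searchf Rr y); simpl; auto.
Qed.
Local Hint Resolve C_zN : cdb.
Lemma C_Nt : CP1 Nt. Proof. unfold Nt. cz1. Qed.
Local Hint Resolve C_Nt : cdb.

Definition Pv m i k cw pc := nth_c (cpair (cpair m i) (take_c k cw)) pc.
Definition viol m c j L cw pc :=
  bex (fun i => andn (lebn j i)
     (bex (fun k => andn (andn (sg (Pv m i k cw pc)) (isz (bex (fun k' => sg (Pv m i k' cw pc)) k)))
                         (isz (eqbn (Pv m i k cw pc) (S c)))) (S L))) L.
Definition entries_ok L cw := isz (bex (fun l => isz (ltbn (nth_c l cw) (Nt (l + 2)))) L).
Definition cons_all L cw := isz (bex (fun l => isz (b2n (cons_ok ha hb hc (nth_c l cw) (nth_c (S l) cw) l))) (L - 1)).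
Definition good m c j L cw pc :=
  andn (eqbn (len_c cw) L) (andn (entries_ok L cw) (andn (cons_all L cw) (isz (viol m c j L cw pc)))).
Definition Mx L := bsum (fun l => Nt (l + 2)) L.
Definition rout n pc :=
  andn (pfst (psnd (pfst n)))
   (bex (fun cw => good (pfst (pfst n)) (pfst (psnd (pfst n))) (psnd (psnd (pfst n))) (psnd n) cw pc)
        (S (Frep (Mx (psnd n)) (psnd n)))).
Definition Bnd n := S (cpair (cpair (pfst (pfst n)) (psnd n)) (Frep (Mx (psnd n)) (psnd n))).
Definition hfinal z := ite (eqbn (len_c (psnd z)) (Bnd (pfst z))) (S (rout (pfst z) (psnd z))) 0.

Lemma C_hfinal : CP1 hfinal.
Proof. unfold hfinal, Bnd, rout, Mx, good, cons_all, entries_ok, viol, Pv, cons_ok. cz1. Qed.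

End Alg.

Open Scope nat_scope.

Section Konig.
Variable G : list nat -> Prop.
Variable B : nat -> nat.
Hypothesis Gpre : forall w k, G w -> G (firstn k w).
Hypothesis Gbnd : forall w l, G w -> l < length w -> nth l w 0 < B l.
Hypothesis Ginf : forall L, exists w, length w = L /\ G w.

Definition ext (w : list nat) : Prop :=
  forall L, length w <= L -> exists w', length w' = L /\ G w' /\ firstn (length w) w' = w.

Lemma finite_bound (P : nat -> nat -> Prop) n :
  (forall a, a < n -> exists L, P a L) -> exists Ls, forall a, a < n -> exists L, L <= Ls /\ P a L.
Proof.
  induction n; intros H. exists 0; intros; lia.
  destruct IHn as [Ls HLs]. intros; apply H; lia. destruct (H n (le_n _)) as [Ln Hn].
  exists (Ls + Ln). intros a Ha. destruct (Nat.eq_dec a n).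
  - subst. exists Ln; split; [lia|auto].
  - destruct (HLs a) as [L [HL HP]]; [lia|]. exists L; split; [lia|auto].
Qed.

Lemma firstn_S_nth (l : list nat) n : n < length l -> firstn (S n) l = firstn n l ++ [nth n l 0].
Proof. revert n; induction l; intros n H; simpl in *; [lia|]. destruct n; simpl; auto.
  rewrite IHl by lia. auto. Qed.

Lemma firstn_firstn_le (w : list nat) a b : a <= b -> firstn a (firstn b w) = firstn a w.
Proof. intros. rewrite firstn_firstn. f_equal. lia. Qed.

Lemma ext_step w : ext w -> exists a, ext (w ++ [a]).
Proof.
  intros Hw. apply NNPP. intros Hno.
  assert (Hall : forall a, a < B (length w) -> exists L, length w + 1 <= L /\
    ~ exists w', length w' = L /\ G w' /\ firstn (length (w ++ [a])) w' = w ++ [a]).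
  { intros a Ha. apply NNPP. intros Hn. apply Hno. exists a. intros L HL.
    apply NNPP. intros Hn2. apply Hn. exists L. rewrite length_app in HL. simpl in HL. split; auto. }
  destruct (finite_bound _ _ Hall) as [Ls HLs].
  destruct (Hw (length w + 1 + Ls)) as [w' [Hl [HG Hpre]]]. lia.
  set (a := nth (length w) w' 0).
  assert (Ha : a < B (length w)) by (apply Gbnd; auto; lia).
  destruct (HLs a Ha) as [L [HLle [HL Hnot]]]. apply Hnot.
  exists (firstn L w'). split; [rewrite length_firstn; lia|]. split; [apply Gpre; auto|].
  rewrite length_app. simpl. rewrite firstn_firstn_le by lia.
  replace (length w + 1) with (S (length w)) by lia.
  rewrite firstn_S_nth by lia. rewrite Hpre. auto.
Qed.

Lemma ext_nil : ext [].
Proof. intros L _. destruct (Ginf L) as [w [Hl HG]]. exists w; auto. Qed.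

Lemma konig : exists q : nat -> nat, forall L, G (prefix q L).
Proof.
  assert (Hc : forall w, exists a, ext w -> ext (w ++ [a])).
  { intros w. destruct (classic (ext w)) as [H|H].
    - destruct (ext_step w H) as [a Ha]. exists a; auto.
    - exists 0; tauto. }
  destruct (choice _ Hc) as [nx Hnx].
  set (pw := fix pw n := match n with 0 => [] | S n => pw n ++ [nx (pw n)] end).
  assert (Hext : forall n, ext (pw n)) by (induction n; simpl; auto using ext_nil).
  assert (Hlen : forall n, length (pw n) = n) by (induction n; simpl; auto; rewrite length_app; simpl; lia).
  exists (fun i => nx (pw i)). intros L.
  assert (prefix (fun i => nx (pw i)) L = pw L).
  { induction L; auto. unfold prefix in *. rewrite seq_S, map_app, IHL. simpl. auto. }
  rewrite H. destruct (Hext L L) as [w' [H1 [H2 H3]]]. rewrite Hlen; auto.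
  rewrite Hlen, firstn_all2 in H3 by lia. rewrite <- H3. auto.
Qed.
End Konig.

Open Scope nat_scope.

Lemma andn_nz a b : andn a b <> 0 <-> a <> 0 /\ b <> 0.
Proof. unfold andn, sg. destruct a, b; simpl; split; intros; try lia; tauto. Qed.
Lemma isz_nz a : isz a <> 0 <-> a = 0.
Proof. destruct a; simpl; split; intros; lia. Qed.
Lemma sg_nz a : sg a <> 0 <-> a <> 0.
Proof. destruct a; simpl; split; intros; lia. Qed.
Lemma lebn_nz a b : lebn a b <> 0 <-> a <= b.
Proof. unfold lebn. destruct (Nat.leb_spec a b); simpl; split; intros; lia. Qed.
Lemma ltbn_nz a b : ltbn a b <> 0 <-> a < b.
Proof. unfold ltbn. destruct (Nat.ltb_spec a b); simpl; split; intros; lia. Qed.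
Lemma eqbn_nz a b : eqbn a b <> 0 <-> a = b.
Proof. unfold eqbn. destruct (Nat.eqb_spec a b); simpl; split; intros; lia. Qed.
Lemma b2n_nz b : b2n b <> 0 <-> b = true.
Proof. destruct b; simpl; split; intros; auto; congruence. Qed.
Lemma bex_z P n : bex P n = 0 <-> forall i, i < n -> P i = 0.
Proof.
  split.
  - intros H i Hi. destruct (Nat.eq_dec (P i) 0); auto. exfalso.
    assert (bex P n <> 0) by (apply bex_spec; eauto). lia.
  - intros H. destruct (Nat.eq_dec (bex P n) 0); auto. apply bex_spec in n0.
    destruct n0 as [i [Hi Hp]]. apply H in Hi. lia.
Qed.
Lemma nz_dec a : a = 0 \/ a <> 0. Proof. lia. Qed.
Lemma andn_01 a b : andn a b = 0 \/ andn a b = 1.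
Proof. unfold andn, sg. destruct a, b; simpl; auto. Qed.

Lemma rout_01 ha hb hc hF n pc : rout ha hb hc hF n pc = 0 \/ rout ha hb hc hF n pc = 1.
Proof. unfold rout. apply andn_01. Qed.

Section Main.
Variable M : cmetric_space.
Variables ha hb hc : nat -> nat.
Hypothesis Happ : forall i j n, let m := cpair (cpair i j) n in
  (Rabs ((INR (ha m) - INR (hb m)) / INR (S (hc m)) - cm_dist M (cm_dense M i) (cm_dense M j)) <= / 2 ^ n)%R.
Variable hF : nat -> nat.
Hypothesis HF : realizes hF (IsFull (cauchy_rep M)).

Local Notation d := (cm_dense M).
Local Notation dist := (cm_dist M).
Local Notation Nt := (Nt ha hb hc hF).
Local Notation searchf := (searchf ha hb hc hF).
Local Notation cb := (cert_ball ha hb hc).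

Lemma searchf_spec Rr z : searchf Rr z <> 0 <->
  searchc (cb Rr) hF (pfst z) (pfst (psnd z)) (psnd (psnd z)).
Proof.
  unfold searchf, searchc. rewrite andn_nz, lebn_nz, isz_nz, bex_z.
  rewrite prefA_eq. split; intros [H1 H2]; split; auto.
  - intros k' Hk'. specialize (H2 k' Hk'). rewrite prefA_eq in H2. revert H2. generalize (hF (cpair (pfst (psnd z)) (code_list (prefix (Aset (cb Rr) (Nat.min (pfst z))) k')))).
    intros [|v]; simpl; intros; auto; discriminate.
  - intros k' Hk'. rewrite prefA_eq, H2; auto.
Qed.

Lemma Hex Rr : exists z, searchf Rr z <> 0.
Proof.
  destruct (search_exists (cauchy_rep M) (Sball M Rr) (cb Rr) (ball_sound M ha hb hc Happ Rr)
    (ball_complete M ha hb hc Happ Rr) hF HF (ball_cover M Rr)) as [N [n0 [k Hs]]].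
  exists (cpair N (cpair n0 k)). apply searchf_spec. rewrite ?cpair_fst, ?cpair_snd, ?cpair_fst, ?cpair_snd. auto.
Qed.

Lemma net_prop Rr (x : cauchy_rep M) : exists i, i < Nt Rr /\ Sball M Rr i x.
Proof.
  destruct (least_spec _ (Hex Rr)) as [H1 _]. fold (zN ha hb hc hF Rr) in H1.
  apply searchf_spec in H1.
  apply (search_sound _ _ _ (ball_sound M ha hb hc Happ Rr) (ball_complete M ha hb hc Happ Rr) hF HF _ _ _ H1).
Qed.

Lemma andn_z a b : andn a b = 0 <-> a = 0 \/ b = 0.
Proof. unfold andn, sg. destruct a, b; simpl; split; intros; try lia; tauto. Qed.
Lemma isz_z a : isz a = 0 <-> a <> 0.
Proof. destruct a; simpl; split; intros; lia. Qed.
Lemma sg_z a : sg a = 0 <-> a = 0.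
Proof. destruct a; simpl; split; intros; lia. Qed.

Definition Pw (p : nat -> nat) m i k (w : list nat) := p (cpair (cpair m i) (code_list (firstn k w))).
Definition nonviol p m c j (w : list nat) : Prop :=
  forall i k, j <= i -> i < length w -> k <= length w -> Pw p m i k w <> 0 ->
    (forall k', k' < k -> Pw p m i k' w = 0) -> Pw p m i k w = S c.
Definition goodL p m c j (w : list nat) : Prop :=
  (forall l, l < length w -> nth l w 0 < Nt (l + 2)) /\
  (forall l, S l < length w -> cons_ok ha hb hc (nth l w 0) (nth (S l) w 0) l = true) /\
  nonviol p m c j w.

Lemma idx_bound m i k (w : list nat) : i <= length w ->
  cpair (cpair m i) (code_list (firstn k w)) <= cpair (cpair m (length w)) (code_list w).
Proof. intros. apply cpair_mono. apply cpair_mono; lia. apply code_firstn_le. Qed.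

Section Good.
Variables (p : nat -> nat) (m c j : nat) (w : list nat) (pc : nat).
Hypothesis Hpc : forall idx, idx <= cpair (cpair m (length w)) (code_list w) -> nth_c idx pc = p idx.

Lemma Pv_eq i k : i <= length w -> Pv m i k (code_list w) pc = Pw p m i k w.
Proof. intros. unfold Pv, Pw. rewrite take_code. apply Hpc, idx_bound; auto. Qed.

Lemma viol_iff : viol m c j (length w) (code_list w) pc = 0 <-> nonviol p m c j w.
Proof.
  unfold viol, nonviol. rewrite bex_z. split.
  - intros H i k Hji Hi Hk HP Hmin. specialize (H i Hi). apply andn_z in H.
    destruct H as [H|H]; [apply lebn_nz in Hji; lia|].
    rewrite bex_z in H. specialize (H k ltac:(lia)). rewrite Pv_eq in H by lia.
    apply andn_z in H. destruct H as [H|H].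
    + apply andn_z in H. destruct H as [H|H]; [repeat rewrite sg_z in H; lia|].
      apply isz_z in H. exfalso. apply H. apply bex_z. intros k' Hk'. rewrite Pv_eq by lia. rewrite Hmin; auto.
    + apply isz_z in H. apply eqbn_nz in H. auto.
  - intros H i Hi. apply andn_z. destruct (Nat.le_gt_cases j i) as [Hji|Hji].
    + right. apply bex_z. intros k Hk. rewrite Pv_eq by lia. apply andn_z.
      destruct (nz_dec (Pw p m i k w)) as [Hz|Hnz].
      * left. apply andn_z. left. rewrite Hz. reflexivity.
      * destruct (classic (forall k', k' < k -> Pw p m i k' w = 0)) as [Hm|Hm].
        -- right. apply isz_z. apply eqbn_nz. apply H; auto; lia.
        -- left. apply andn_z. right. apply isz_z. intros Hb. apply Hm. intros k' Hk'.
           rewrite bex_z in Hb. specialize (Hb k' Hk'). rewrite Pv_eq in Hb by lia. repeat rewrite sg_z in Hb. auto.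
    + left. unfold lebn. destruct (Nat.leb_spec j i); [lia|auto].
Qed.

Lemma good_iff : good ha hb hc hF m c j (length w) (code_list w) pc <> 0 <-> goodL p m c j w.
Proof.
  unfold good, goodL. rewrite !andn_nz, eqbn_nz, len_code, isz_nz, viol_iff.
  unfold entries_ok, cons_all. rewrite !isz_nz, !bex_z.
  split.
  - intros [_ [H1 [H2 H3]]]. split; [|split; auto].
    + intros l Hl. specialize (H1 l Hl). apply isz_z in H1. apply ltbn_nz in H1. rewrite nth_code in H1. auto.
    + intros l Hl. specialize (H2 l ltac:(lia)). apply isz_z in H2. apply b2n_nz in H2. rewrite !nth_code in H2. auto.
  - intros [H1 [H2 H3]]. split; auto. split; [|split; auto].
    + intros l Hl. apply isz_z, ltbn_nz. rewrite nth_code. auto.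
    + intros l Hl. apply isz_z, b2n_nz. rewrite !nth_code. apply H2. lia.
Qed.
End Good.

Lemma bsum_ge P n i : i < n -> P i <= bsum P n.
Proof. induction n; simpl; intros; [lia|]. destruct (Nat.eq_dec i n); [subst; lia|]. specialize (IHn ltac:(lia)). lia. Qed.

Local Notation Bnd := (Bnd ha hb hc hF).
Local Notation rout := (rout ha hb hc hF).

Lemma rout_iff p n : rout n (code_list (prefix p (Bnd n))) <> 0 <->
  pfst (psnd (pfst n)) <> 0 /\ exists w, length w = psnd n /\
    goodL p (pfst (pfst n)) (pfst (psnd (pfst n))) (psnd (psnd (pfst n))) w.
Proof.
  set (m := pfst (pfst n)). set (c := pfst (psnd (pfst n))). set (j := psnd (psnd (pfst n))). set (L := psnd n).
  assert (Hpc : forall w, length w = L -> code_list w <= Frep (Mx ha hb hc hF L) L ->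
     forall idx, idx <= cpair (cpair m (length w)) (code_list w) ->
       nth_c idx (code_list (prefix p (Bnd n))) = p idx).
  { intros w Hl Hb idx Hidx. rewrite nth_code, prefix_nth; auto.
    unfold Bnd. fold m L. apply Nat.lt_succ_r. eapply Nat.le_trans; [exact Hidx|]. rewrite Hl.
    apply cpair_mono; auto. }
  unfold rout. fold m c j L. rewrite andn_nz. split.
  - intros [Hc Hb]. split; auto. apply bex_spec in Hb. destruct Hb as [cw [Hcw Hg]].
    destruct (code_surj cw) as [w <-].
    assert (Hl : length w = L).
    { unfold good in Hg. apply andn_nz in Hg. destruct Hg as [Hg _]. apply eqbn_nz in Hg. rewrite len_code in Hg. auto. }
    exists w. split; auto. rewrite <- Hl in Hg. apply (good_iff p m c j w) in Hg; auto.
    apply Hpc; auto. lia.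
  - intros [Hc [w [Hl Hg]]]. split; auto.
    assert (Hb : code_list w <= Frep (Mx ha hb hc hF L) L).
    { rewrite <- Hl. apply code_bound. intros x Hx. apply In_nth with (d := 0) in Hx.
      destruct Hx as [l [Hl' <-]]. destruct Hg as [He _]. specialize (He l Hl').
      unfold Mx. pose proof (bsum_ge (fun l => Nt (l + 2)) L l ltac:(lia)). cbv beta in H. rewrite Hl. lia. }
    apply bex_spec. exists (code_list w). split; [lia|].
    rewrite <- Hl. apply (good_iff p m c j w); auto. apply Hpc; auto.
Qed.

Lemma goodL_prefix p m c j w L0 : goodL p m c j w -> goodL p m c j (firstn L0 w).
Proof.
  unfold goodL, nonviol. intros [H1 [H2 H3]]. rewrite length_firstn. split; [|split].
  - intros l Hl. rewrite nth_firstn. destruct (Nat.ltb_spec l L0); [|lia]. apply H1; lia.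
  - intros l Hl. rewrite !nth_firstn. destruct (Nat.ltb_spec l L0); [|lia].
    destruct (Nat.ltb_spec (S l) L0); [|lia]. apply H2; lia.
  - intros i k Hji Hi Hk HP Hmin. unfold Pw in *. rewrite firstn_firstn_le in * by lia.
    apply H3; auto; try lia. intros k' Hk'. specialize (Hmin k' Hk'). rewrite firstn_firstn_le in Hmin by lia. auto.
Qed.


Lemma assoc_unique (h q r : nat -> nat) n k v :
  assoc h q r -> h (cpair n (code_list (prefix q k))) = S v ->
  (forall k', k' < k -> h (cpair n (code_list (prefix q k'))) = 0) -> r n = v.
Proof.
  intros Ha Hk Hmin. destruct (Ha n) as [k0 [H1 H2]].
  destruct (Nat.lt_trichotomy k0 k) as [Hl|[Hl|Hl]].
  - apply Hmin in Hl. congruence.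
  - subst. congruence.
  - apply H2 in Hl. congruence.
Qed.

Lemma lim_unique (s r : nat -> nat) m : is_lim s r ->
  forall j c, (forall i, j <= i -> s (cpair m i) = c) -> r m = c.
Proof.
  intros Hl j c Hc. destruct (Hl m) as [i0 Hi0]. rewrite <- (Hi0 (i0 + j)) by lia. apply Hc; lia.
Qed.

Section Equiv.
Variable U : cont_map (cauchy_rep M) Sierp'.
Variable p : nat -> nat.
Hypothesis Hp : realizes p (proj1_sig U).

Lemma equiv_fwd : (exists x, proj1_sig U x = true) ->
  exists m c j, c <> 0 /\ forall L, exists w, length w = L /\ goodL p m c j w.
Proof.
  intros [x Hx].
  assert (Hq : forall l, exists i, i < Nt (l + 2) /\ Sball M (l + 2) i x) by (intros; apply net_prop).
  destruct (choice _ Hq) as [q Hq'].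
  assert (Hname : delta (cauchy_rep M) q x).
  { simpl. intros n. destruct (Hq' n) as [_ H]. unfold Sball in H. pose proof (inv_pow2_le n (n + 2) ltac:(lia)). left. eapply Rlt_le_trans; [exact H|exact H0]. }
  destruct (Hp q x Hname) as [s [Hs [r'' [Hlim HU]]]].
  apply HU in Hx. destruct Hx as [m Hm].
  destruct (Hlim m) as [j Hj].
  exists m, (r'' m), j. split; auto. intros L. exists (prefix q L). split; [apply prefix_length|].
  unfold goodL, nonviol. rewrite prefix_length. split; [|split].
  - intros l Hl. rewrite prefix_nth by auto. apply Hq'.
  - intros l Hl. rewrite !prefix_nth by lia. apply (cons_ok_complete M ha hb hc Happ).
    destruct (Hq' l) as [_ H1]. destruct (Hq' (S l)) as [_ H2]. unfold Sball in *.
    pose proof (cm_dist_tri M (d (q l)) x (d (q (S l)))). rewrite (cm_dist_sym M x) in H.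
    replace (S l + 2) with (l + 3) in H2 by lia.
    assert (/ 2 ^ (l + 2) = 4 * / 2 ^ (l + 4))%R.
    { replace (l + 4) with ((l + 2) + 2) by lia. rewrite (inv_pow2_add (l + 2) 2). replace (2 ^ 2)%R with 4%R by (simpl; lra). field. apply pow_nonzero; lra. }
    assert (/ 2 ^ (l + 3) = 2 * / 2 ^ (l + 4))%R.
    { replace (l + 4) with ((l + 3) + 1) by lia. rewrite (inv_pow2_add (l + 3) 1). replace (2 ^ 1)%R with 2%R by (simpl; lra). field. apply pow_nonzero; lra. }
    lra.
  - intros i k Hji Hi Hk HP Hmin. unfold Pw in *. rewrite firstn_prefix in * by lia.
    assert (Hk' : forall k', k' < k -> p (cpair (cpair m i) (code_list (prefix q k'))) = 0).
    { intros k' Hk'. specialize (Hmin k' Hk'). rewrite firstn_prefix in Hmin by lia. auto. }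
    destruct (p (cpair (cpair m i) (code_list (prefix q k)))) as [|v] eqn:E; [lia|].
    f_equal. rewrite <- (assoc_unique p q s _ k v Hs E Hk'). apply Hj. auto.
Qed.

Lemma equiv_bwd : (exists m c j, c <> 0 /\ forall L, exists w, length w = L /\ goodL p m c j w) ->
  exists x, proj1_sig U x = true.
Proof.
  intros [m [c [j [Hc Hall]]]].
  destruct (konig (goodL p m c j) (fun l => Nt (l + 2)) (fun w k H => goodL_prefix p m c j w k H)
     (fun w l H Hl => proj1 H l Hl) Hall) as [q Hq].
  assert (Hcons : forall n, (cm_dist M (d (q n)) (d (q (S n))) <= / 2 ^ S n)%R).
  { intros n. apply (cons_ok_sound M ha hb hc Happ). destruct (Hq (S (S n))) as [_ [H _]].
    specialize (H n). rewrite prefix_length, !prefix_nth in H by lia. apply H. lia. }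
  destruct (complete_M M ha hb hc Happ hF HF q Hcons) as [x Hx].
  exists x. destruct (Hp q x Hx) as [s [Hs [r'' [Hlim HU]]]]. apply HU. exists m.
  rewrite (lim_unique s r'' m Hlim j c); auto.
  intros i Hji. destruct (Hs (cpair m i)) as [k [Hk1 Hk2]].
  destruct (Hq (S i + k)) as [_ [_ Hnv]]. unfold nonviol, Pw in Hnv. rewrite prefix_length in Hnv.
  assert (E : forall k', k' <= k -> firstn k' (prefix q (S i + k)) = prefix q k') by (intros; apply firstn_prefix; lia).
  specialize (Hnv i k Hji ltac:(lia) ltac:(lia)). rewrite E in Hnv by lia. rewrite Hk1 in Hnv.
  assert (S (s (cpair m i)) = S c); [|lia]. apply Hnv; [lia|].
  intros k' Hk'. rewrite E by lia. apply Hk2; auto.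
Qed.
End Equiv.

Lemma hfinal_realizes : realizes (hfinal ha hb hc hF) (IsNonEmpty' (cauchy_rep M)).
Proof.
  intros p U Hp. simpl in Hp.
  exists (fun n => rout n (code_list (prefix p (Bnd n)))). split.
  - intros n. exists (Bnd n). split.
    + unfold hfinal. rewrite cpair_fst, cpair_snd, len_code, prefix_length.
      unfold eqbn. rewrite Nat.eqb_refl. reflexivity.
    + intros k Hk. unfold hfinal. rewrite cpair_fst, cpair_snd, len_code, prefix_length.
      unfold eqbn. destruct (Nat.eqb_spec k (Bnd n)); [lia|reflexivity].
  - set (Q := fun t => pfst (psnd t) <> 0 /\ forall L, exists w, length w = L /\
        goodL p (pfst t) (pfst (psnd t)) (psnd (psnd t)) w).
    exists (fun t => b2n (bool_of (Q t))). split.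
    + intros t. destruct (classic (Q t)) as [HQ|HQ].
      * exists 0. intros i _. assert (Hb : bool_of (Q t) = true) by (apply bool_of_true; auto). rewrite Hb.
        assert (Hr : rout (cpair t i) (code_list (prefix p (Bnd (cpair t i)))) <> 0).
        { apply rout_iff. rewrite cpair_fst, cpair_snd. destruct HQ as [H1 H2]. split; auto. }
        destruct (rout_01 ha hb hc hF (cpair t i) (code_list (prefix p (Bnd (cpair t i))))); [lia|]. simpl. auto.
      * assert (Hb : bool_of (Q t) = false).
        { destruct (bool_of (Q t)) eqn:E; auto. rewrite bool_of_true in E. tauto. }
        rewrite Hb. simpl.
        destruct (nz_dec (pfst (psnd t))) as [Hc|Hc].
        -- exists 0. intros i _. destruct (nz_dec (rout (cpair t i) (code_list (prefix p (Bnd (cpair t i)))))) as [E|E]; auto.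
           apply rout_iff in E. rewrite cpair_fst in E. tauto.
        -- assert (HL : exists L0, ~ exists w, length w = L0 /\ goodL p (pfst t) (pfst (psnd t)) (psnd (psnd t)) w).
           { apply NNPP. intros Hn. apply HQ. split; auto. intros L. apply NNPP. intros Hn2. apply Hn. eauto. }
           destruct HL as [L0 HL0]. exists L0. intros i Hi.
           destruct (nz_dec (rout (cpair t i) (code_list (prefix p (Bnd (cpair t i)))))) as [E|E]; auto.
           apply rout_iff in E. rewrite cpair_fst, cpair_snd in E. destruct E as [_ [w [Hw Hg]]].
           exfalso. apply HL0. exists (firstn L0 w). split; [rewrite length_firstn; lia|].
           apply goodL_prefix; auto.
    + unfold Sierp; cbn [delta]. unfold IsNonEmpty'. rewrite bool_of_true. split.
      * intros Hx. destruct (equiv_fwd U p Hp Hx) as [m [c [j [Hc Hall]]]].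
        exists (cpair m (cpair c j)). assert (Hb : bool_of (Q (cpair m (cpair c j))) = true).
        { apply bool_of_true. unfold Q. rewrite ?cpair_fst, ?cpair_snd, ?cpair_fst, ?cpair_snd. auto. }
        rewrite Hb. simpl. lia.
      * intros [t Ht]. apply (equiv_bwd U p Hp). destruct (bool_of (Q t)) eqn:E; [|simpl in Ht; lia].
        rewrite bool_of_true in E. destruct E as [H1 H2]. exists (pfst t), (pfst (psnd t)), (psnd (psnd t)). auto.
Qed.
End Main.

Lemma cn_CP1 h : computable_nat h -> CP1 h.
Proof. intros [e He]. exists e. intros [|x [|]] Hl; try discriminate. apply He. Qed.
Lemma CP1_cn h : CP1 h -> computable_nat h.
Proof. intros [e He]. exists e. intros n. apply (He [n]). reflexivity. Qed.

Theorem lemma37 (M : cmetric_space) :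
  computably_compact (cauchy_rep M) -> prime_overt (cauchy_rep M).
Proof.
  intros [hF [ChF HF]]. destruct (cm_dist_computable M) as [ha [hb [hc [Cha [Chb [Chc Happ]]]]]].
  exists (hfinal ha hb hc hF). split.
  - apply CP1_cn. apply C_hfinal; try apply cn_CP1; auto.
    apply (Hex M ha hb hc Happ hF HF).
  - apply (hfinal_realizes M ha hb hc Happ hF HF).
Qed.
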